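(* Let $[a,b]$ be a segment and $\lambda>0$. For the $L$-splines generated by the differential operator $L=D^2-\lambda^2$, one has \[ \sup_{\Delta}\|P_{\mathbb{S}(L,\Delta)}\|_{C[a,b]\to C[a,b]}=3, \] where the supremum is over all partitions $\Delta$ of $[a,b]$.
   Context: A partition of $[a,b]$ is $\Delta=\{a=t_1<t_2<\dots<t_n=b\}$ ($n\ge 2$), with subsegments $\Delta_i=[t_i,t_{i+1}]$. For a linear differential operator $L$ of order $2$ with constant real coefficients, $N_L=\{f\in C^2[a,b]: Lf=0 \text{ on } [a,b]\}$, and the space of $L$-splines is $\mathbb{S}(L,\Delta)=\{s\in C[a,b]: s|_{\Delta_i}\in N_L|_{\Delta_i},\ i=1,\dots,n-1\}$. Thus for $L=D^2-\lambda^2$, a spline is a continuous function which on each $\Delta_i$ is a linear combination of $e^{\lambda x}$ and $e^{-\lambda x}$. $P_{\mathbb{S}(L,\Delta)}:C[a,b]\to\mathbb{S}(L,\Delta)$ is the orthogonal projection with respect to the $L_2[a,b]$ inner product, i.e. $P f\in\mathbb{S}(L,\Delta)$ with $\langle f,s\rangle=\langle Pf,s\rangle$ for all $s\in\mathbb{S}(L,\Delta)$; its norm is $\sup\{\|Pf\|_\infty: f\in C[a,b],\ \|f\|_\infty\le 1\}$. *)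

(* Defs.v *)
From Stdlib Require Import Reals List.
From Coquelicot Require Import Coquelicot.
Open Scope R_scope.

(* A partition a = t_1 < t_2 < ... < t_n = b of [a,b], n >= 2, as a list of reals
   (0-based indexing: D = [t_1; ...; t_n]). *)
Definition is_partition (a b : R) (D : list R) : Prop :=
  (2 <= length D)%nat /\
  nth 0 D 0 = a /\
  nth (pred (length D)) D 0 = b /\
  (forall i : nat, (S i < length D)%nat -> nth i D 0 < nth (S i) D 0).

Definition seg (a b : R) : R -> Prop := fun x => a <= x <= b.

Definition is_Lspline (a b lam : R) (D : list R) (s : R -> R) : Prop :=
  continuous_on (seg a b) s /\
  (forall i : nat, (S i < length D)%nat ->
     exists c1 c2 : R, forall x : R, nth i D 0 <= x <= nth (S i) D 0 ->
       s x = c1 * exp (lam * x) + c2 * exp (- lam * x)).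

Definition L2ip (a b : R) (f g : R -> R) : R := RInt (fun x => f x * g x) a b.

Definition is_orth_proj (a b lam : R) (D : list R) (f p : R -> R) : Prop :=
  is_Lspline a b lam D p /\
  (forall s : R -> R, is_Lspline a b lam D s -> L2ip a b f s = L2ip a b p s).

Definition proj_values (a b lam : R) (D : list R) (y : R) : Prop :=
  exists (f p : R -> R) (x : R),
    continuous_on (seg a b) f /\
    (forall t, seg a b t -> Rabs (f t) <= 1) /\
    is_orth_proj a b lam D f p /\
    seg a b x /\ y = Rabs (p x).

Definition proj_opnorm (a b lam : R) (D : list R) : Rbar :=
  Lub_Rbar (proj_values a b lam D).

(* Main.v *)
Require Import Defs.
From Stdlib Require Import Reals List Lra Lia Psatz.
From Coquelicot Require Import Coquelicot.
Open Scope R_scope.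

Definition sh (x : R) := (exp x - exp (- x)) / 2.
Definition ch (x : R) := (exp x + exp (- x)) / 2.

Lemma exp_neg x : exp (- x) = / exp x.
Proof. apply exp_Ropp. Qed.

Lemma ch_pos x : 0 < ch x.
Proof. unfold ch; pose proof (exp_pos x); pose proof (exp_pos (-x)); lra. Qed.

Lemma ch_ge1 x : 1 <= ch x.
Proof.
  unfold ch; rewrite exp_neg. pose proof (exp_pos x) as H.
  set (E := exp x) in *.
  assert (E + / E - 2 = (E - 1)^2 / E) by (field; lra).
  assert (0 <= (E - 1)^2 * / E) by (apply Rmult_le_pos; [apply pow2_ge_0| left; apply Rinv_0_lt_compat; lra]).
  unfold Rdiv in *. lra.
Qed.

Lemma sh_0 : sh 0 = 0.
Proof. unfold sh; rewrite Ropp_0; lra. Qed.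
Lemma ch_0 : ch 0 = 1.
Proof. unfold ch; rewrite Ropp_0, exp_0; lra. Qed.

Lemma sh_lt x y : x < y -> sh x < sh y.
Proof.
  intros H; unfold sh. pose proof (exp_increasing _ _ H).
  assert (exp (-y) < exp (-x)) by (apply exp_increasing; lra). lra.
Qed.
Lemma sh_le x y : x <= y -> sh x <= sh y.
Proof. intros [H|H]; [left; now apply sh_lt| subst; lra]. Qed.
Lemma sh_nonneg x : 0 <= x -> 0 <= sh x.
Proof. intros; rewrite <- sh_0; now apply sh_le. Qed.
Lemma sh_pos x : 0 < x -> 0 < sh x.
Proof. intros; rewrite <- sh_0; now apply sh_lt. Qed.
Lemma sh_neg x : x <= 0 -> sh x <= 0.
Proof. intros; rewrite <- sh_0; now apply sh_le. Qed.

Lemma ch2_sh2 x : ch x ^ 2 - sh x ^ 2 = 1.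
Proof. unfold ch, sh; rewrite exp_neg; pose proof (exp_pos x); field; lra. Qed.

Lemma sh_add x y : sh (x + y) = sh x * ch y + ch x * sh y.
Proof.
  unfold ch, sh; rewrite !exp_neg, exp_plus.
  pose proof (exp_pos x); pose proof (exp_pos y); field; lra.
Qed.

Lemma sh_superadd x y : 0 <= x -> 0 <= y -> sh x + sh y <= sh (x + y).
Proof.
  intros. rewrite sh_add. pose proof (ch_ge1 x); pose proof (ch_ge1 y).
  pose proof (sh_nonneg x H); pose proof (sh_nonneg y H0). nra.
Qed.

Lemma derive_sh x : is_derive sh x (ch x).
Proof. unfold sh, ch. auto_derive; auto. lra. Qed.
Lemma derive_ch x : is_derive ch x (sh x).
Proof. unfold sh, ch. auto_derive; auto. lra. Qed.

Lemma nonneg_from_deriv (F dF : R -> R) (x : R) :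
  (forall y, 0 <= y <= x -> is_derive F y (dF y)) ->
  (forall y, 0 <= y <= x -> 0 <= dF y) -> 0 <= F 0 -> 0 <= x -> 0 <= F x.
Proof.
  intros HD Hpos H0 Hx. destruct Hx as [Hx|Hx]; [|subst; auto].
  destruct (MVT_cor2 F dF 0 x Hx) as [c [Hc1 Hc2]].
  { intros c Hc. apply is_derive_Reals. now apply HD. }
  assert (0 <= dF c) by (apply Hpos; lra). nra.
Qed.

Lemma sh_ge_id x : 0 <= x -> x <= sh x.
Proof.
  intros Hx. enough (0 <= sh x - x) by lra.
  apply (nonneg_from_deriv (fun y => sh y - y) (fun y => ch y - 1)); auto.
  - intros y _. unfold sh, ch. auto_derive; auto. lra.
  - intros y _. pose proof (ch_ge1 y); lra.
  - rewrite sh_0; lra.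
Qed.

Ltac exp_simpl x := unfold sh, ch; rewrite ?exp_neg; pose proof (exp_pos x).

Lemma xch_ge_sh x : 0 <= x -> sh x <= x * ch x.
Proof.
  intros Hx. enough (0 <= x * ch x - sh x) by lra.
  apply (nonneg_from_deriv (fun y => y * ch y - sh y) (fun y => y * sh y)); auto.
  - intros y _. unfold sh, ch. auto_derive; auto. lra.
  - intros y [Hy _]. pose proof (sh_nonneg y Hy). nra.
  - rewrite sh_0; lra.
Qed.

Lemma ch_m1_le x : 0 <= x -> ch x - 1 <= x ^ 2 * ch x / 2.
Proof.
  intros Hx. enough (0 <= x ^ 2 * ch x / 2 - ch x + 1) by lra.
  apply (nonneg_from_deriv (fun y => y ^ 2 * ch y / 2 - ch y + 1)
    (fun y => (y * ch y - sh y) + y ^ 2 * sh y / 2)); auto.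
  - intros y _. unfold sh, ch. auto_derive; auto. field.
  - intros y [Hy _]. pose proof (sh_nonneg y Hy). pose proof (xch_ge_sh y Hy).
    assert (0 <= y ^ 2 * sh y) by (apply Rmult_le_pos; [apply pow2_ge_0|lra]). lra.
  - rewrite ch_0; lra.
Qed.

Lemma sh_m_id_le x : 0 <= x -> sh x - x <= x ^ 3 * ch x / 6.
Proof.
  intros Hx. enough (0 <= x ^ 3 * ch x / 6 - sh x + x) by lra.
  apply (nonneg_from_deriv (fun y => y ^ 3 * ch y / 6 - sh y + y)
    (fun y => (y ^ 2 * ch y / 2 - ch y + 1) + y ^ 3 * sh y / 6)); auto.
  - intros y _. unfold sh, ch. auto_derive; auto. field.
  - intros y [Hy _]. pose proof (sh_nonneg y Hy). pose proof (ch_m1_le y Hy).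
    assert (0 <= y ^ 3 * sh y) by (apply Rmult_le_pos; [apply pow_le; lra|lra]). lra.
  - rewrite sh_0; lra.
Qed.

Lemma ch_le2 x : 0 <= x <= 1 -> ch x <= 2.
Proof.
  intros Hx. pose proof (ch_m1_le x (proj1 Hx)). pose proof (ch_pos x).
  assert (x ^ 2 <= 1) by nra. nra.
Qed.

Lemma ch_le_1sq x : 0 <= x <= 1 -> ch x <= 1 + x ^ 2.
Proof.
  intros Hx. pose proof (ch_m1_le x (proj1 Hx)). pose proof (ch_le2 x Hx).
  assert (0 <= x ^ 2) by nra. nra.
Qed.

Lemma key_H t : 0 <= t -> 3 * t <= sh t * ch t + 2 * sh t / ch t.
Proof.
  intros Ht. enough (0 <= sh t * ch t + 2 * sh t / ch t - 3 * t) by lra.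
  apply (nonneg_from_deriv (fun y => sh y * ch y + 2 * sh y / ch y - 3 * y)
    (fun y => 2 * sh y ^ 4 / ch y ^ 2)); auto.
  - intros y _. pose proof (ch_pos y) as Hc.
    unfold sh, ch in *. pose proof (exp_pos y). pose proof (exp_pos (-y)).
    auto_derive.
    + lra.
    + rewrite !exp_neg. rewrite exp_neg in *. field.
      split; nra.
  - intros y _. pose proof (ch_pos y).
    unfold Rdiv. apply Rmult_le_pos. apply Rmult_le_pos. lra.
    replace (sh y ^ 4) with ((sh y ^ 2) ^ 2) by ring. apply pow2_ge_0.
    left. apply Rinv_0_lt_compat. apply pow_lt. auto.
  - rewrite sh_0, ch_0; lra.
Qed.

Lemma ch_m1_ge x : 0 <= x -> x ^ 2 / 2 <= ch x - 1.
Proof.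
  intros Hx. enough (0 <= ch x - 1 - x ^ 2 / 2) by lra.
  apply (nonneg_from_deriv (fun y => ch y - 1 - y ^ 2 / 2) (fun y => sh y - y)); auto.
  - intros y _. unfold sh, ch. auto_derive; auto. field.
  - intros y [Hy _]. pose proof (sh_ge_id y Hy). lra.
  - rewrite ch_0; lra.
Qed.

Lemma sh_double t : sh (2 * t) = 2 * sh t * ch t.
Proof.
  unfold sh, ch. replace (2 * t) with (t + t) by ring. rewrite !exp_neg, exp_plus.
  pose proof (exp_pos t). field. lra.
Qed.
Lemma ch_double t : ch (2 * t) = 2 * ch t ^ 2 - 1.
Proof.
  unfold sh, ch. replace (2 * t) with (t + t) by ring. rewrite !exp_neg, exp_plus.
  pose proof (exp_pos t). field. lra.
Qed.

Ltac toR := match goal with |- ?a = ?b => change (@eq R a b) end.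

Lemma RInt_anti (F f : R -> R) a b :
  (forall x, is_derive F x (f x)) -> (forall x, continuous f x) ->
  RInt f a b = F b - F a.
Proof.
  intros HD HC.
  assert (H := is_RInt_derive F f a b (fun x _ => HD x) (fun x _ => HC x)).
  apply is_RInt_unique in H. rewrite H. reflexivity.
Qed.

Lemma ex_RInt_cont (f : R -> R) a b : (forall x, continuous f x) -> ex_RInt f a b.
Proof. intros; apply (@ex_RInt_continuous R_CompleteNormedModule); auto. Qed.

Section Interval.
Variable lam : R.
Definition uu (x0 x1 x : R) := sh (lam * (x1 - x)) / sh (lam * (x1 - x0)).
Definition vv (x0 x1 x : R) := sh (lam * (x - x0)) / sh (lam * (x1 - x0)).
End Interval.

Lemma cont_R (f : R -> R) x : ex_derive f x -> continuous f x.
Proof. apply (@ex_derive_continuous R_AbsRing R_NormedModule). Qed.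

Lemma cont_sh_lin (k c : R) x : continuous (fun y => sh (k * y + c)) x.
Proof. apply cont_R. unfold sh. auto_derive; auto. Qed.

Lemma helpS E : 0 < E -> (E + - / E) / 2 <> 0 -> E * E + -1 <> 0.
Proof. intros HE H Hc. apply H. field_simplify_eq; [|lra]. nra. Qed.

Section Closed.
Variables (lam x0 x1 : R).
Hypothesis Hlam : lam <> 0.
Hypothesis HS : sh (lam * (x1 - x0)) <> 0.
Let mu := lam * (x1 - x0).

Lemma int_vv : RInt (vv lam x0 x1) x0 x1 = (ch mu - 1) / (lam * sh mu).
Proof.
  rewrite (RInt_anti (fun x => ch (lam * (x - x0)) / (lam * sh mu))).
  - toR. unfold mu. replace (lam * (x0 - x0)) with 0 by ring. rewrite ch_0. field. auto.
  - intros x. unfold vv, mu in *. unfold sh, ch in *. auto_derive.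
    + auto.
    + toR. unfold Rminus in *. field. repeat split; auto; intro; apply HS; lra.
  - intros y. apply cont_R. unfold vv, sh, ch in *. auto_derive. auto.
Qed.

Lemma int_uu : RInt (uu lam x0 x1) x0 x1 = (ch mu - 1) / (lam * sh mu).
Proof.
  rewrite (RInt_anti (fun x => - ch (lam * (x1 - x)) / (lam * sh mu))).
  - toR. unfold mu. replace (lam * (x1 - x1)) with 0 by ring. rewrite ch_0. field. auto.
  - intros x. unfold uu, mu in *. unfold sh, ch in *. unfold Rminus in *. auto_derive.
    + repeat split; auto; intro; apply HS; lra.
    + toR. field. repeat split; auto; intro; apply HS; lra.
  - intros y. apply cont_R. unfold uu, sh, ch in *. auto_derive. auto.
Qed.

Lemma int_vv2 : RInt (fun x => vv lam x0 x1 x * vv lam x0 x1 x) x0 x1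
   = (sh mu * ch mu - mu) / (2 * lam * sh mu ^ 2).
Proof.
  rewrite (RInt_anti (fun x => (sh (lam * (x - x0)) * ch (lam * (x - x0)) / (2 * lam)
                                - (x - x0) / 2) / sh mu ^ 2)).
  - toR. unfold mu. replace (lam * (x0 - x0)) with 0 by ring. rewrite ch_0, sh_0. field. auto.
  - intros x. unfold vv, mu in *. unfold sh, ch in *. unfold Rminus in *. auto_derive.
    + repeat split; auto; intro; apply HS; lra.
    + toR. rewrite !exp_neg in *. pose proof (exp_pos (lam * (x + - x0))).
      field. repeat split; auto; try lra; try (apply helpS; auto; apply exp_pos); apply Rgt_not_eq, exp_pos.
  - intros y. apply cont_R. unfold vv, sh, ch in *. auto_derive. auto.
Qed.

Lemma int_uu2 : RInt (fun x => uu lam x0 x1 x * uu lam x0 x1 x) x0 x1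
   = (sh mu * ch mu - mu) / (2 * lam * sh mu ^ 2).
Proof.
  rewrite (RInt_anti (fun x => - (sh (lam * (x1 - x)) * ch (lam * (x1 - x)) / (2 * lam)
                                - (x1 - x) / 2) / sh mu ^ 2)).
  - toR. unfold mu. replace (lam * (x1 - x1)) with 0 by ring. rewrite ch_0, sh_0. field. auto.
  - intros x. unfold uu, mu in *. unfold sh, ch in *. unfold Rminus in *. auto_derive.
    + repeat split; auto; intro; apply HS; lra.
    + toR. rewrite !exp_neg in *. pose proof (exp_pos (lam * (x1 + - x))).
      field. repeat split; auto; try lra; try (apply helpS; auto; apply exp_pos); apply Rgt_not_eq, exp_pos.
  - intros y. apply cont_R. unfold uu, sh, ch in *. auto_derive. auto.
Qed.

Lemma int_uuvv : RInt (fun x => uu lam x0 x1 x * vv lam x0 x1 x) x0 x1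
   = (mu * ch mu - sh mu) / (2 * lam * sh mu ^ 2).
Proof.
  rewrite (RInt_anti (fun x => (x * ch mu / 2 -
      (sh (lam * (x - x0)) * ch (lam * (x1 - x)) - ch (lam * (x - x0)) * sh (lam * (x1 - x)))
        / (4 * lam)) / sh mu ^ 2)).
  - toR. unfold mu. replace (lam * (x0 - x0)) with 0 by ring.
    replace (lam * (x1 - x1)) with 0 by ring. rewrite ch_0, sh_0. field. auto.
  - intros x. unfold uu, vv, mu in *. unfold sh, ch in *. unfold Rminus in *. auto_derive.
    + repeat split; auto; intro; apply HS; lra.
    + toR. replace (lam * (x1 + - x0)) with (lam * (x1 + - x) + lam * (x + - x0)) in * by ring.
      rewrite !exp_neg in *. rewrite !exp_plus in *.
      pose proof (exp_pos (lam * (x + - x0))). pose proof (exp_pos (lam * (x1 + - x))).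
      field.
      repeat split; auto; try lra; try (apply helpS; [apply Rmult_lt_0_compat; auto | auto]); try (apply Rgt_not_eq, exp_pos).
  - intros y. apply cont_R. unfold uu, vv, sh, ch in *. auto_derive. auto.
Qed.
End Closed.

Section Pt.
Variables (lam x0 x1 : R).
Hypothesis Hlam : 0 < lam.
Hypothesis Hx : x0 < x1.

Lemma S_pos : 0 < sh (lam * (x1 - x0)).
Proof. apply sh_pos. apply Rmult_lt_0_compat; lra. Qed.

Lemma uu_nonneg x : x <= x1 -> 0 <= uu lam x0 x1 x.
Proof.
  intros H. unfold uu. pose proof S_pos. apply Rdiv_le_0_compat; auto.
  apply sh_nonneg. apply Rmult_le_pos; lra.
Qed.
Lemma vv_nonneg x : x0 <= x -> 0 <= vv lam x0 x1 x.
Proof.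
  intros H. unfold vv. pose proof S_pos. apply Rdiv_le_0_compat; auto.
  apply sh_nonneg. apply Rmult_le_pos; lra.
Qed.
Lemma uu_vv_le1 x : x0 <= x <= x1 -> uu lam x0 x1 x + vv lam x0 x1 x <= 1.
Proof.
  intros H. unfold uu, vv. pose proof S_pos.
  assert (sh (lam * (x1 - x)) + sh (lam * (x - x0)) <= sh (lam * (x1 - x0))).
  { replace (lam * (x1 - x0)) with (lam * (x1 - x) + lam * (x - x0)) by ring.
    apply sh_superadd; apply Rmult_le_pos; lra. }
  unfold Rdiv. rewrite <- Rmult_plus_distr_r.
  apply (Rmult_le_reg_r (sh (lam * (x1 - x0)))); auto.
  rewrite Rmult_assoc, Rinv_l; lra.
Qed.
Lemma uu_le1 x : x0 <= x <= x1 -> uu lam x0 x1 x <= 1.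
Proof. intros H. pose proof (uu_vv_le1 x H). pose proof (vv_nonneg x (proj1 H)). lra. Qed.
Lemma vv_le1 x : x0 <= x <= x1 -> vv lam x0 x1 x <= 1.
Proof. intros H. pose proof (uu_vv_le1 x H). pose proof (uu_nonneg x (proj2 H)). lra. Qed.
Lemma uu_x0 : uu lam x0 x1 x0 = 1.
Proof. unfold uu. pose proof S_pos. field. lra. Qed.
Lemma uu_x1 : uu lam x0 x1 x1 = 0.
Proof. unfold uu. replace (lam * (x1 - x1)) with 0 by ring. rewrite sh_0. unfold Rdiv; ring. Qed.
Lemma vv_x1 : vv lam x0 x1 x1 = 1.
Proof. unfold vv. pose proof S_pos. field. lra. Qed.
Lemma vv_x0 : vv lam x0 x1 x0 = 0.
Proof. unfold vv. replace (lam * (x0 - x0)) with 0 by ring. rewrite sh_0. unfold Rdiv; ring. Qed.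
End Pt.

Definition IA lam x0 x1 : R := RInt (fun x => uu lam x0 x1 x * uu lam x0 x1 x) x0 x1.
Definition IB lam x0 x1 : R := RInt (fun x => uu lam x0 x1 x * vv lam x0 x1 x) x0 x1.
Definition IC lam x0 x1 : R := RInt (fun x => vv lam x0 x1 x * vv lam x0 x1 x) x0 x1.
Definition IU lam x0 x1 : R := RInt (uu lam x0 x1) x0 x1.
Definition IV lam x0 x1 : R := RInt (vv lam x0 x1) x0 x1.

Section Q.
Variables (lam x0 x1 : R).
Hypothesis Hlam : 0 < lam.
Hypothesis Hx : x0 < x1.
Let mu := lam * (x1 - x0).
Let HS : sh mu <> 0.
Proof. apply Rgt_not_eq, S_pos; auto. Qed.
Let Hl : lam <> 0.
Proof. lra. Qed.

Lemma mu_pos : 0 < mu.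
Proof. unfold mu. apply Rmult_lt_0_compat; lra. Qed.

Lemma key_ineq_C : IV lam x0 x1 / 3 <= IC lam x0 x1 - IB lam x0 x1.
Proof.
  unfold IV, IC, IB. rewrite int_vv, int_vv2, int_uuvv; auto. fold mu.
  pose proof mu_pos as Hm.
  set (T := mu / 2). assert (HT : mu = 2 * T) by (unfold T; field).
  rewrite HT, sh_double, ch_double.
  assert (HT0 : 0 <= T) by (unfold T; lra).
  pose proof (key_H T HT0). pose proof (ch_pos T). pose proof (sh_pos T ltac:(unfold T; lra)).
  set (s := sh T) in *. set (c := ch T) in *.
  assert (E : (2 * s * c * (2 * c ^ 2 - 1) - 2 * T) / (2 * lam * (2 * s * c) ^ 2) -
    (2 * T * (2 * c ^ 2 - 1) - 2 * s * c) / (2 * lam * (2 * s * c) ^ 2) -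
    (2 * c ^ 2 - 1 - 1) / (lam * (2 * s * c)) / 3
    = (4 * c ^ 2 * (s * c + 2 * s / c - 3 * T)) / (6 * lam * (2 * s * c) ^ 2)).
  { field. repeat split; lra. }
  assert (0 <= (4 * c ^ 2 * (s * c + 2 * s / c - 3 * T)) / (6 * lam * (2 * s * c) ^ 2)).
  { apply Rdiv_le_0_compat. apply Rmult_le_pos. nra. lra.
    apply Rmult_lt_0_compat. lra. apply pow_lt. nra. }
  lra.
Qed.

Lemma IA_IC : IA lam x0 x1 = IC lam x0 x1.
Proof. unfold IA, IC. rewrite int_vv2, int_uu2; auto. Qed.
Lemma IU_IV : IU lam x0 x1 = IV lam x0 x1.
Proof. unfold IU, IV. rewrite int_vv, int_uu; auto. Qed.

Lemma IB_nonneg : 0 <= IB lam x0 x1.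
Proof.
  unfold IB. rewrite int_uuvv; auto. fold mu. pose proof mu_pos.
  pose proof (xch_ge_sh mu ltac:(lra)). pose proof (S_pos lam x0 x1 Hlam Hx). fold mu in H1.
  apply Rdiv_le_0_compat. lra. apply Rmult_lt_0_compat. lra. apply pow_lt; lra.
Qed.

Lemma IV_ratio : 3 / ch mu ^ 2 * (IC lam x0 x1 - IB lam x0 x1) <= IV lam x0 x1.
Proof.
  unfold IV, IC, IB. rewrite int_vv, int_vv2, int_uuvv; auto. fold mu.
  pose proof mu_pos as Hm. pose proof (S_pos lam x0 x1 Hlam Hx) as HSp. fold mu in HSp.
  pose proof (ch_m1_ge mu ltac:(lra)). pose proof (sh_ge_id mu ltac:(lra)).
  pose proof (sh_m_id_le mu ltac:(lra)). pose proof (ch_ge1 mu).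
  set (S := sh mu) in *. set (C := ch mu) in *.
  assert (E1 : (S * C - mu) / (2 * lam * S ^ 2) - (mu * C - S) / (2 * lam * S ^ 2)
            = (S - mu) * (C + 1) / (2 * lam * S ^ 2)) by (field; lra).
  rewrite E1.
  assert (E2 : 3 / C ^ 2 * ((S - mu) * (C + 1) / (2 * lam * S ^ 2))
            = (3 * (S - mu) * (C + 1) / C ^ 2) / (2 * lam * S ^ 2)) by (field; lra).
  assert (E3 : (C - 1) / (lam * S) = (2 * S * (C - 1)) / (2 * lam * S ^ 2)) by (field; lra).
  rewrite E2, E3. apply Rmult_le_compat_r.
  { left. apply Rinv_0_lt_compat. apply Rmult_lt_0_compat. lra. apply pow_lt; lra. }
  assert (3 * (S - mu) * (C + 1) / C ^ 2 <= mu ^ 3).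
  { apply (Rmult_le_reg_r (C ^ 2)). apply pow_lt; lra.
    unfold Rdiv. rewrite Rmult_assoc, Rinv_l by (apply pow_nonzero; lra).
    assert (0 <= S - mu) by lra.
    assert (3 * (S - mu) * (C + 1) <= 3 * (mu ^ 3 * C / 6) * (2 * C)) by nra. nra. }
  assert (mu ^ 3 <= 2 * S * (C - 1)) by nra. lra.
Qed.

Lemma IV_lower : mu <= 1 -> (x1 - x0) / 4 <= IV lam x0 x1.
Proof.
  intros Hm1. unfold IV. rewrite int_vv; auto. fold mu.
  pose proof mu_pos as Hm. pose proof (S_pos lam x0 x1 Hlam Hx) as HSp. fold mu in HSp.
  pose proof (ch_m1_ge mu ltac:(lra)). pose proof (xch_ge_sh mu ltac:(lra)).
  pose proof (ch_le2 mu ltac:(lra)).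
  assert (Hh : x1 - x0 = mu / lam) by (unfold mu; field; lra). rewrite Hh.
  assert (E : (ch mu - 1) / (lam * sh mu) - mu / lam / 4 = (4 * (ch mu - 1) - mu * sh mu) / (4 * lam * sh mu)) by (field; lra).
  assert (0 <= (4 * (ch mu - 1) - mu * sh mu) / (4 * lam * sh mu)).
  { apply Rdiv_le_0_compat. nra. nra. }
  lra.
Qed.
End Q.

Definition Row (l d r e : nat -> R) (j : nat) := l j * e (pred j) + d j * e j + r j * e (S j).

Lemma argmax_abs (e : nat -> R) (n : nat) :
  exists j, (j <= n)%nat /\ forall k, (k <= n)%nat -> Rabs (e k) <= Rabs (e j).
Proof.
  induction n as [|n IH].
  - exists 0%nat. split; [lia|]. intros k Hk. replace k with 0%nat by lia. lra.
  - destruct IH as [j [Hj Hm]].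
    destruct (Rle_dec (Rabs (e (S n))) (Rabs (e j))) as [H|H].
    + exists j. split; [lia|]. intros k Hk. destruct (Nat.eq_dec k (S n)); [subst; auto|].
      apply Hm; lia.
    + exists (S n). split; [lia|]. intros k Hk. destruct (Nat.eq_dec k (S n)); [subst; lra|].
      specialize (Hm k ltac:(lia)). lra.
Qed.

Lemma dominance (n : nat) (l d r w e : nat -> R) (delta : R) :
  (forall j, (j <= n)%nat -> 0 <= l j /\ 0 <= r j /\ 0 < w j /\ w j / 3 <= d j - l j - r j) ->
  r n = 0 ->
  (forall j, (j <= n)%nat -> Rabs (Row l d r e j) <= delta * w j) ->
  forall j, (j <= n)%nat -> Rabs (e j) <= 3 * delta.
Proof.
  intros Hc Hrn HR.
  destruct (argmax_abs e n) as [j [Hj Hm]].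
  intros k Hk. eapply Rle_trans; [apply Hm; auto|].
  destruct (Hc j Hj) as [Hl [Hr [Hw Hd]]].
  specialize (HR j Hj). unfold Row in HR.
  assert (H1 : Rabs (e (pred j)) <= Rabs (e j)) by (apply Hm; lia).
  assert (H2 : r j * Rabs (e (S j)) <= r j * Rabs (e j)).
  { destruct (Nat.eq_dec j n) as [E|E].
    - subst. rewrite Hrn. lra.
    - apply Rmult_le_compat_l; auto. apply Hm; lia. }
  assert (H3 : d j * Rabs (e j) <= delta * w j + l j * Rabs (e (pred j)) + r j * Rabs (e (S j))).
  { assert (Rabs (d j * e j) <= Rabs (l j * e (pred j) + d j * e j + r j * e (S j))
       + Rabs (l j * e (pred j)) + Rabs (r j * e (S j))).
    { replace (d j * e j) with ((l j * e (pred j) + d j * e j + r j * e (S j))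
          - l j * e (pred j) - r j * e (S j)) at 1 by ring.
      eapply Rle_trans. apply Rabs_triang. unfold Rminus.
      rewrite (Rabs_Ropp (r j * e (S j))).
      apply Rplus_le_compat_r. eapply Rle_trans. apply Rabs_triang.
      rewrite Rabs_Ropp. lra. }
    assert (0 <= d j) by lra.
    rewrite !Rabs_mult, (Rabs_pos_eq (d j)), (Rabs_pos_eq (l j)), (Rabs_pos_eq (r j)) in H; auto.
    lra. }
  assert (H4 : w j / 3 * Rabs (e j) <= delta * w j).
  { assert (l j * Rabs (e (pred j)) <= l j * Rabs (e j)) by (apply Rmult_le_compat_l; auto).
    assert ((d j - l j - r j) * Rabs (e j) <= delta * w j) by nra.
    assert (w j / 3 * Rabs (e j) <= (d j - l j - r j) * Rabs (e j)).
    { apply Rmult_le_compat_r; auto. apply Rabs_pos. }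
    lra. }
  nra.
Qed.

Section Thomas.
Variables (n : nat) (l d r m : nat -> R).

Fixpoint fw (j : nat) : R * R :=
  match j with
  | O => (r 0 / d 0, m 0 / d 0)
  | S k => let (ek, gk) := fw k in
           (r (S k) / (d (S k) - l (S k) * ek), (m (S k) - l (S k) * gk) / (d (S k) - l (S k) * ek))
  end.

Definition eps j := fst (fw j).
Definition gam j := snd (fw j).

Fixpoint bk (k : nat) : R :=
  match k with
  | O => gam n
  | S k' => gam (n - S k') - eps (n - S k') * bk k'
  end.

Definition sol (j : nat) := bk (n - j).

Hypothesis Hc : forall j, (j <= n)%nat -> 0 <= l j /\ 0 <= r j /\ l j + r j < d j.
Hypothesis Hl0 : l 0 = 0.
Hypothesis Hrn : r n = 0.

Lemma eps_bound j : (j <= n)%nat -> 0 <= eps j <= 1.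
Proof.
  induction j as [|j IH]; intros Hj.
  - unfold eps; simpl. destruct (Hc 0 ltac:(lia)) as [? [? ?]].
    split. apply Rdiv_le_0_compat; lra.
    apply (Rmult_le_reg_r (d 0)); [lra|]. unfold Rdiv. rewrite Rmult_assoc, Rinv_l; lra.
  - specialize (IH ltac:(lia)). unfold eps in *; simpl.
    destruct (fw j) as [ek gk]. simpl in *.
    destruct (Hc (S j) Hj) as [? [? ?]].
    assert (0 < d (S j) - l (S j) * ek) by nra.
    split. apply Rdiv_le_0_compat; lra.
    apply (Rmult_le_reg_r (d (S j) - l (S j) * ek)); [lra|]. unfold Rdiv.
    rewrite Rmult_assoc, Rinv_l; nra.
Qed.

Lemma sol_rec j : (j <= n)%nat -> sol j = gam j - eps j * sol (S j).
Proof.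
  intros Hj. unfold sol. destruct (Nat.eq_dec j n) as [E|E].
  - subst. rewrite Nat.sub_diag. simpl.
    assert (eps n = 0).
    { unfold eps. destruct n as [|n']; simpl.
      - rewrite Hrn; unfold Rdiv; ring.
      - destruct (fw n') as [ek gk]; simpl. rewrite Hrn; unfold Rdiv; ring. }
    rewrite H. ring.
  - replace (n - j)%nat with (S (n - S j)) by lia. simpl.
    replace (n - S (n - S j))%nat with j by lia. reflexivity.
Qed.

Lemma thomas_row j : (j <= n)%nat -> Row l d r sol j = m j.
Proof.
  intros Hj. unfold Row.
  destruct j as [|j].
  - simpl. rewrite Hl0. rewrite (sol_rec 0 Hj). unfold eps, gam; simpl.
    destruct (Hc 0 Hj) as [? [? ?]]. field. lra.
  - simpl pred. rewrite (sol_rec j ltac:(lia)). rewrite (sol_rec (S j) Hj).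
    pose proof (eps_bound j ltac:(lia)).
    unfold eps, gam in *; simpl. destruct (fw j) as [ek gk]; simpl in *.
    destruct (Hc (S j) Hj) as [? [? ?]].
    assert (0 < d (S j) - l (S j) * ek) by nra.
    field. lra.
Qed.
End Thomas.

Lemma thomas_exists (n : nat) (l d r m : nat -> R) :
  (forall j, (j <= n)%nat -> 0 <= l j /\ 0 <= r j /\ l j + r j < d j) ->
  l 0%nat = 0 -> r n = 0 ->
  exists c : nat -> R, forall j, (j <= n)%nat -> Row l d r c j = m j.
Proof. intros. exists (sol n l d r m). intros; apply thomas_row; auto. Qed.

Section Signs.
Variables (lam x0 x1 : R).
Hypothesis Hlam : 0 < lam.
Hypothesis Hx : x0 < x1.
Lemma vv_ge1 x : x1 <= x -> 1 <= vv lam x0 x1 x.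
Proof.
  intros H. unfold vv. pose proof (S_pos lam x0 x1 Hlam Hx).
  apply (Rmult_le_reg_r (sh (lam * (x1 - x0)))); auto.
  unfold Rdiv. rewrite Rmult_assoc, Rinv_l by lra. rewrite Rmult_1_l, Rmult_1_r.
  apply sh_le. apply Rmult_le_compat_l; lra.
Qed.
Lemma vv_le0 x : x <= x0 -> vv lam x0 x1 x <= 0.
Proof.
  intros H. unfold vv. pose proof (S_pos lam x0 x1 Hlam Hx).
  unfold Rdiv. apply Rmult_le_0_r. apply sh_neg. nra.
  left; apply Rinv_0_lt_compat; auto.
Qed.
Lemma uu_ge1 x : x <= x0 -> 1 <= uu lam x0 x1 x.
Proof.
  intros H. unfold uu. pose proof (S_pos lam x0 x1 Hlam Hx).
  apply (Rmult_le_reg_r (sh (lam * (x1 - x0)))); auto.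
  unfold Rdiv. rewrite Rmult_assoc, Rinv_l by lra. rewrite Rmult_1_l, Rmult_1_r.
  apply sh_le. apply Rmult_le_compat_l; lra.
Qed.
Lemma uu_le0 x : x1 <= x -> uu lam x0 x1 x <= 0.
Proof.
  intros H. unfold uu. pose proof (S_pos lam x0 x1 Hlam Hx).
  unfold Rdiv. apply Rmult_le_0_r. apply sh_neg. nra.
  left; apply Rinv_0_lt_compat; auto.
Qed.
Lemma uu_cont x : continuous (uu lam x0 x1) x.
Proof. pose proof (S_pos lam x0 x1 Hlam Hx). apply cont_R. unfold uu, sh in *. auto_derive. lra. Qed.
Lemma vv_cont x : continuous (vv lam x0 x1) x.
Proof. pose proof (S_pos lam x0 x1 Hlam Hx). apply cont_R. unfold vv, sh in *. auto_derive. lra. Qed.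
End Signs.

Lemma cont_cpt (f : R -> R) x : continuity_pt f x -> continuous f x.
Proof. intros H. apply continuity_pt_filterlim. auto. Qed.
Lemma cpt_cont (f : R -> R) x : continuous f x -> continuity_pt f x.
Proof. intros H. apply continuity_pt_filterlim. auto. Qed.

Lemma Rmax_abs x y : Rmax x y = (x + y + Rabs (x - y)) / 2.
Proof. unfold Rmax. destruct (Rle_dec x y); [rewrite Rabs_left1 by lra | rewrite Rabs_right by lra]; lra. Qed.
Lemma Rmin_abs x y : Rmin x y = (x + y - Rabs (x - y)) / 2.
Proof. unfold Rmin. destruct (Rle_dec x y); [rewrite Rabs_left1 by lra | rewrite Rabs_right by lra]; lra. Qed.

Lemma cont_max0min (f g : R -> R) x : continuous f x -> continuous g x ->
  continuous (fun y => Rmax 0 (Rmin (f y) (g y))) x.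
Proof.
  intros Hf Hg. apply cpt_cont in Hf. apply cpt_cont in Hg. apply cont_cpt.
  assert (Hm : continuity_pt (fun y => Rmin (f y) (g y)) x).
  { apply (continuity_pt_ext (fun y => (f y + g y - Rabs (f y - g y)) / 2)).
    { intros; rewrite Rmin_abs; auto. }
    unfold Rdiv. apply continuity_pt_mult; [|apply continuity_pt_const; intros ? ?; auto].
    apply continuity_pt_minus. apply continuity_pt_plus; auto.
    apply (continuity_pt_comp (fun y => f y - g y) Rabs). apply continuity_pt_minus; auto.
    apply Rcontinuity_abs. }
  apply (continuity_pt_ext (fun y => (0 + Rmin (f y) (g y) + Rabs (0 - Rmin (f y) (g y))) / 2)).
  { intros; rewrite Rmax_abs; auto. }
  unfold Rdiv. apply continuity_pt_mult; [|apply continuity_pt_const; intros ? ?; auto].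
  apply continuity_pt_plus. apply continuity_pt_plus; auto. apply continuity_pt_const; intros ? ?; auto.
  apply (continuity_pt_comp (fun y => 0 - Rmin (f y) (g y)) Rabs).
  apply continuity_pt_minus; auto. apply continuity_pt_const; intros ? ?; auto.
  apply Rcontinuity_abs.
Qed.

Lemma RI_plus (f g : R -> R) a b : ex_RInt f a b -> ex_RInt g a b ->
  RInt (fun x => f x + g x) a b = RInt f a b + RInt g a b.
Proof. intros H1 H2. exact (@RInt_plus R_CompleteNormedModule f g a b H1 H2). Qed.
Lemma RI_scal (f : R -> R) a b k : ex_RInt f a b ->
  RInt (fun x => k * f x) a b = k * RInt f a b.
Proof. intros H1. exact (@RInt_scal R_CompleteNormedModule f a b k H1). Qed.
Lemma RI_point (f : R -> R) a : RInt f a a = 0.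
Proof. exact (@RInt_point R_CompleteNormedModule a f). Qed.
Lemma RI_zero a b : RInt (fun _ => 0) a b = 0.
Proof. rewrite (@RInt_const R_CompleteNormedModule). simpl. unfold scal; simpl. unfold mult; simpl. ring. Qed.
Lemma exRI_plus (f g : R -> R) a b : ex_RInt f a b -> ex_RInt g a b -> ex_RInt (fun x => f x + g x) a b.
Proof. intros H1 H2. exact (@ex_RInt_plus R_NormedModule f g a b H1 H2). Qed.
Lemma exRI_scal (f : R -> R) a b k : ex_RInt f a b -> ex_RInt (fun x => k * f x) a b.
Proof. intros H1. exact (@ex_RInt_scal R_NormedModule f a b k H1). Qed.
Lemma exRI_ext (f g : R -> R) a b : (forall x, Rmin a b < x < Rmax a b -> f x = g x) -> ex_RInt f a b -> ex_RInt g a b.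
Proof. intros H1 H2. exact (@ex_RInt_ext R_NormedModule f g a b H1 H2). Qed.
Lemma RI_ext (f g : R -> R) a b : (forall x, Rmin a b < x < Rmax a b -> f x = g x) -> RInt f a b = RInt g a b.
Proof. intros H1. exact (@RInt_ext R_CompleteNormedModule f g a b H1). Qed.
Lemma RI_chasles (f : R -> R) a b c : ex_RInt f a b -> ex_RInt f b c -> RInt f a b + RInt f b c = RInt f a c.
Proof. intros H1 H2. exact (@RInt_Chasles R_CompleteNormedModule f a b c H1 H2). Qed.
Lemma exRI_sub (f : R -> R) a b c d : a <= c -> c <= d -> d <= b -> ex_RInt f a b -> ex_RInt f c d.
Proof.
  intros H1 H2 H3 H. apply (@ex_RInt_Chasles_2 R_CompleteNormedModule f a c d). lra.
  apply (@ex_RInt_Chasles_1 R_CompleteNormedModule f a d b). lra. auto.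
Qed.
Lemma RI_lin2 (f g : R -> R) a b c0 c1 : ex_RInt f a b -> ex_RInt g a b ->
  RInt (fun x => c0 * f x + c1 * g x) a b = c0 * RInt f a b + c1 * RInt g a b.
Proof.
  intros H1 H2. rewrite RI_plus. rewrite !RI_scal; auto.
  apply exRI_scal; auto. apply exRI_scal; auto.
Qed.
Lemma RI_le (f g : R -> R) a b : a <= b -> ex_RInt f a b -> ex_RInt g a b ->
  (forall x, a < x < b -> f x <= g x) -> RInt f a b <= RInt g a b.
Proof. apply RInt_le. Qed.
Lemma RI_abs_le (f g : R -> R) a b : a <= b -> ex_RInt f a b -> ex_RInt g a b ->
  (forall x, a < x < b -> Rabs (f x) <= g x) -> Rabs (RInt f a b) <= RInt g a b.
Proof.
  intros Hab Hf Hg H. destruct Hab as [Hab|Hab].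
  2: { subst. rewrite !RI_point, Rabs_R0. lra. }
  apply Rabs_le. split.
  - assert (RInt (fun x => - g x) a b <= RInt f a b).
    { apply RI_le; auto. lra. apply (exRI_ext (fun x => (-1) * g x)). intros; ring. apply exRI_scal; auto.
      intros x Hx. specialize (H x Hx). apply Rabs_le_between in H. lra. }
    rewrite (RI_ext (fun x => - g x) (fun x => (-1) * g x)) in H0 by (intros; ring).
    rewrite RI_scal in H0; auto. lra.
  - apply RI_le; auto. lra. intros x Hx. specialize (H x Hx). apply Rabs_le_between in H. lra.
Qed.

Fixpoint sumr (F : nat -> R) (k : nat) : R :=
  match k with O => 0 | S k' => sumr F k' + F k' end.

Lemma sum_two_gen (F : nat -> R) i k :
  (forall j, (j < k)%nat -> j <> i -> j <> S i -> F j = 0) ->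
  sumr F k = (if Nat.ltb i k then F i else 0) + (if Nat.ltb (S i) k then F (S i) else 0).
Proof.
  induction k as [|k IH]; intros H; simpl. lra.
  rewrite IH by (intros; apply H; auto; lia).
  destruct (Nat.eq_dec k i) as [E|E].
  - subst. destruct (Nat.ltb_spec i i); [lia|]. destruct (Nat.ltb_spec i (S i)); [|lia].
    destruct (Nat.ltb_spec (S i) i); [lia|]. destruct (Nat.ltb_spec (S i) (S i)); [lia|]. lra.
  - destruct (Nat.eq_dec k (S i)) as [E2|E2].
    + subst. destruct (Nat.ltb_spec i (S i)); [|lia]. destruct (Nat.ltb_spec i (S (S i))); [|lia].
      destruct (Nat.ltb_spec (S i) (S i)); [lia|]. destruct (Nat.ltb_spec (S i) (S (S i))); [|lia]. lra.
    + rewrite (H k) by (auto; lia).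
      destruct (Nat.ltb_spec i k); destruct (Nat.ltb_spec i (S k)); try lia;
      destruct (Nat.ltb_spec (S i) k); destruct (Nat.ltb_spec (S i) (S k)); try lia; lra.
Qed.

Lemma sum_two (F : nat -> R) i k : (S i < k)%nat ->
  (forall j, (j < k)%nat -> j <> i -> j <> S i -> F j = 0) ->
  sumr F k = F i + F (S i).
Proof.
  intros Hk H. rewrite (sum_two_gen F i k H).
  destruct (Nat.ltb_spec i k); [|lia]. destruct (Nat.ltb_spec (S i) k); [|lia]. auto.
Qed.

Lemma RI_sumr (G : nat -> R -> R) a b k :
  (forall j, (j < k)%nat -> ex_RInt (G j) a b) ->
  ex_RInt (fun x => sumr (fun j => G j x) k) a b /\
  RInt (fun x => sumr (fun j => G j x) k) a b = sumr (fun j => RInt (G j) a b) k.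
Proof.
  induction k as [|k IH]; intros H; simpl.
  - split. apply (exRI_ext (fun _ => 0)). intros; auto.
    apply (@ex_RInt_const R_NormedModule). apply RI_zero.
  - destruct IH as [IH1 IH2]. intros; apply H; lia.
    split. apply exRI_plus; auto.
    rewrite RI_plus; auto. rewrite IH2; auto.
Qed.

Definition clamp (a b x : R) := Rmax a (Rmin b x).

Lemma clamp_cont a b x : continuous (clamp a b) x.
Proof.
  apply cont_cpt. unfold clamp.
  apply (continuity_pt_ext (fun y => (a + (b + y - Rabs (b - y)) / 2 + Rabs (a - (b + y - Rabs (b - y)) / 2)) / 2)).
  { intros y. rewrite Rmax_abs, Rmin_abs. auto. }
  assert (Hm : continuity_pt (fun y => (b + y - Rabs (b - y)) / 2) x).
  { unfold Rdiv. apply continuity_pt_mult; [|apply continuity_pt_const; intros ? ?; auto].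
    apply continuity_pt_minus. apply continuity_pt_plus. apply continuity_pt_const; intros ? ?; auto.
    apply derivable_continuous_pt, derivable_pt_id.
    apply (continuity_pt_comp (fun y => b - y) Rabs).
    apply continuity_pt_minus. apply continuity_pt_const; intros ? ?; auto.
    apply derivable_continuous_pt, derivable_pt_id. apply Rcontinuity_abs. }
  unfold Rdiv at 1. apply continuity_pt_mult; [|apply continuity_pt_const; intros ? ?; auto].
  apply continuity_pt_plus. apply continuity_pt_plus. apply continuity_pt_const; intros ? ?; auto.
  exact Hm.
  apply (continuity_pt_comp (fun y => a - (b + y - Rabs (b - y)) / 2) Rabs).
  apply continuity_pt_minus. apply continuity_pt_const; intros ? ?; auto. exact Hm.
  apply Rcontinuity_abs.
Qed.

Lemma clamp_seg a b x : a <= b -> seg a b (clamp a b x).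
Proof.
  intros H. unfold seg, clamp. split. apply Rmax_l.
  apply Rmax_lub; auto. apply Rmin_l.
Qed.

Lemma clamp_id a b x : a <= x <= b -> clamp a b x = x.
Proof. intros H. unfold clamp. rewrite Rmin_right by lra. rewrite Rmax_right; lra. Qed.

Lemma cont_clamp_comp (g : R -> R) a b y : a <= b -> continuous_on (seg a b) g ->
  continuous (fun x => g (clamp a b x)) y.
Proof.
  intros Hab Hg. unfold continuous.
  apply (filterlim_comp _ _ _ (clamp a b) g (locally y) (within (seg a b) (locally (clamp a b y)))).
  - intros P HP. unfold within in HP.
    pose proof (clamp_cont a b y _ HP) as H. unfold filtermap in H.
    unfold filtermap. apply (filter_imp (fun x => seg a b (clamp a b x) -> P (clamp a b x))); auto.
    intros x Hx. apply Hx. apply clamp_seg; auto.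
  - apply Hg. apply clamp_seg; auto.
Qed.

Lemma exR (g h : R -> R) a b x0 x1 : continuous_on (seg a b) g -> (forall x, continuous h x) ->
  a <= x0 -> x0 <= x1 -> x1 <= b -> ex_RInt (fun x => g x * h x) x0 x1.
Proof.
  intros Hg Hh H0 H1 H2.
  apply (exRI_ext (fun x => g (clamp a b x) * h x)).
  { intros x Hx. rewrite Rmin_left in Hx by lra. rewrite Rmax_right in Hx by lra.
    rewrite clamp_id; auto. lra. }
  apply ex_RInt_cont. intros x. apply cont_cpt. apply continuity_pt_mult; apply cpt_cont.
  apply cont_clamp_comp; auto; lra. auto.
Qed.

Ltac expand_exps := 
  repeat match goal with
  | |- context [exp (- ?l * ?x)] => replace (- l * x) with (- (l * x)) by ring
  end.

Lemma uu_exp lam x0 x1 x : uu lam x0 x1 x =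
  (- exp (- (lam * x1)) / 2 / sh (lam * (x1 - x0))) * exp (lam * x)
  + (exp (lam * x1) / 2 / sh (lam * (x1 - x0))) * exp (- lam * x).
Proof.
  unfold uu. replace (- lam * x) with (- (lam * x)) by ring.
  set (SS := sh (lam * (x1 - x0))). unfold sh at 1.
  replace (lam * (x1 - x)) with (lam * x1 + - (lam * x)) by ring.
  replace (- (lam * x1 + - (lam * x))) with (lam * x + - (lam * x1)) by ring.
  rewrite !exp_plus. unfold Rdiv. ring.
Qed.

Lemma vv_exp lam x0 x1 x : vv lam x0 x1 x =
  (exp (- (lam * x0)) / 2 / sh (lam * (x1 - x0))) * exp (lam * x)
  + (- exp (lam * x0) / 2 / sh (lam * (x1 - x0))) * exp (- lam * x).
Proof.
  unfold vv. replace (- lam * x) with (- (lam * x)) by ring.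
  set (SS := sh (lam * (x1 - x0))). unfold sh at 1.
  replace (lam * (x - x0)) with (lam * x + - (lam * x0)) by ring.
  replace (- (lam * x + - (lam * x0))) with (lam * x0 + - (lam * x)) by ring.
  rewrite !exp_plus. unfold Rdiv. ring.
Qed.

Lemma expcomb_rep lam x0 x1 c1 c2 x : 0 < lam -> x0 < x1 ->
  (c1 * exp (lam * x0) + c2 * exp (- lam * x0)) * uu lam x0 x1 x
  + (c1 * exp (lam * x1) + c2 * exp (- lam * x1)) * vv lam x0 x1 x
  = c1 * exp (lam * x) + c2 * exp (- lam * x).
Proof.
  intros Hl Hx. pose proof (S_pos lam x0 x1 Hl Hx) as HS.
  rewrite uu_exp, vv_exp.
  replace (lam * (x1 - x0)) with (lam * x1 + - (lam * x0)) in * by ring.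
  unfold sh in *. rewrite !exp_plus in *.
  replace (- (lam * x1 + - (lam * x0))) with (lam * x0 + - (lam * x1)) in * by ring.
  rewrite !exp_plus in *.
  replace (- lam * x) with (- (lam * x)) by ring.
  replace (- lam * x0) with (- (lam * x0)) by ring.
  replace (- lam * x1) with (- (lam * x1)) by ring.
  rewrite !exp_neg in *.
  pose proof (exp_pos (lam * x0)). pose proof (exp_pos (lam * x1)). pose proof (exp_pos (lam * x)).
  assert (Hd : exp (lam * x1) * exp (lam * x1) - exp (lam * x0) * exp (lam * x0) =
    ((exp (lam * x1) * / exp (lam * x0) - exp (lam * x0) * / exp (lam * x1)) / 2) * (2 * exp (lam * x0) * exp (lam * x1)))
    by (field; lra).
  assert (0 < exp (lam * x1) * exp (lam * x1) - exp (lam * x0) * exp (lam * x0)).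
  { rewrite Hd. apply Rmult_lt_0_compat; auto. nra. }
  field. repeat split; lra.
Qed.

Lemma sumr_ext (F G : nat -> R) k : (forall j, (j < k)%nat -> F j = G j) -> sumr F k = sumr G k.
Proof. induction k; intros H; simpl; auto. rewrite IHk by (intros; apply H; lia). rewrite H by lia. auto. Qed.

Lemma sumr_mult (F : nat -> R) c k : c * sumr F k = sumr (fun j => c * F j) k.
Proof. induction k; simpl. ring. rewrite <- IHk. ring. Qed.

Lemma sumr_cont (G : nat -> R -> R) k x : (forall j, (j < k)%nat -> continuous (G j) x) ->
  continuous (fun y => sumr (fun j => G j y) k) x.
Proof.
  induction k; intros H; simpl.
  - apply continuous_const.
  - apply cont_cpt. apply continuity_pt_plus; apply cpt_cont. apply IHk; intros; apply H; lia. apply H; lia.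
Qed.

Section Part.
Variables (lam : R) (n : nat) (tau : nat -> R).
Hypothesis Hlam : 0 < lam.
Hypothesis Hn : (1 <= n)%nat.
Hypothesis Hinc : forall i, (i < n)%nat -> tau i < tau (S i).
Hypothesis Hconst : forall i, (n <= i)%nat -> tau i = tau n.

Lemma tau_mono i k : (i <= k)%nat -> tau i <= tau k.
Proof.
  induction k as [|k IH]; intros H.
  - replace i with 0%nat by lia; lra.
  - destruct (Nat.eq_dec i (S k)) as [E|E]; [subst; lra|].
    specialize (IH ltac:(lia)).
    destruct (Nat.lt_ge_cases k n) as [Hk|Hk].
    + specialize (Hinc k Hk). lra.
    + rewrite (Hconst (S k)) by lia. rewrite (Hconst k) in IH by lia. lra.
Qed.

Lemma tau_strict i k : (i < k)%nat -> (k <= n)%nat -> tau i < tau k.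
Proof.
  intros H1 H2. pose proof (Hinc i ltac:(lia)). pose proof (tau_mono (S i) k ltac:(lia)). lra.
Qed.

Lemma find_interval x : tau 0 <= x <= tau n ->
  exists i, (i < n)%nat /\ tau i <= x <= tau (S i).
Proof.
  intros Hx.
  assert (forall k, (1 <= k <= n)%nat -> x <= tau k -> exists i, (i < k)%nat /\ tau i <= x <= tau (S i)).
  { induction k as [|k IH]; intros Hk Hxk; [lia|].
    destruct (Nat.eq_dec k 0) as [E|E].
    - subst. exists 0%nat. split; [lia|lra].
    - destruct (Rle_dec x (tau k)) as [H|H].
      + destruct (IH ltac:(lia) H) as [i [Hi1 Hi2]]. exists i. split; [lia|auto].
      + exists k. split; [lia|]. lra. }
  destruct (H n ltac:(lia) (proj2 Hx)) as [i [Hi1 Hi2]]. eauto.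
Qed.

Definition Lf (j : nat) (x : R) : R :=
  match j with O => 1 | S k => vv lam (tau k) (tau (S k)) x end.
Definition Rf (j : nat) (x : R) : R :=
  if Nat.ltb j n then uu lam (tau j) (tau (S j)) x else 1.
Definition N (j : nat) (x : R) : R := Rmax 0 (Rmin (Lf j x) (Rf j x)).

Lemma N_cont j x : (j <= n)%nat -> continuous (N j) x.
Proof.
  intros Hj. unfold N. apply cont_max0min.
  - destruct j as [|k]; simpl.
    + apply continuous_const.
    + apply (vv_cont lam (tau k) (tau (S k)) Hlam (Hinc k ltac:(lia))).
  - unfold Rf. destruct (Nat.ltb j n) eqn:E.
    + apply Nat.ltb_lt in E. apply (uu_cont lam (tau j) (tau (S j)) Hlam (Hinc j E)).
    + apply continuous_const.
Qed.

Lemma maxmin_eq_l (L R : R) : 0 <= L -> L <= R -> Rmax 0 (Rmin L R) = L.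
Proof. intros. rewrite Rmin_left by auto. rewrite Rmax_right; auto. Qed.
Lemma maxmin_eq_r (L R : R) : 0 <= R -> R <= L -> Rmax 0 (Rmin L R) = R.
Proof. intros. rewrite Rmin_right by auto. rewrite Rmax_right; auto. Qed.
Lemma maxmin_0l (L R : R) : L <= 0 -> Rmax 0 (Rmin L R) = 0.
Proof. intros. apply Rmax_left. pose proof (Rmin_l L R). lra. Qed.
Lemma maxmin_0r (L R : R) : R <= 0 -> Rmax 0 (Rmin L R) = 0.
Proof. intros. apply Rmax_left. pose proof (Rmin_r L R). lra. Qed.

Lemma Lf_ge1 j x : (j <= n)%nat -> tau j <= x -> 1 <= Lf j x.
Proof.
  intros Hj Hx. destruct j as [|k]; simpl; [lra|]. apply vv_ge1; auto; try (apply Hinc; lia).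
Qed.
Lemma Rf_ge1 j x : x <= tau j -> 1 <= Rf j x.
Proof.
  intros Hx. unfold Rf. destruct (Nat.ltb_spec j n); [|lra]. apply uu_ge1; auto.
Qed.

Lemma N_right i x : (i < n)%nat -> tau i <= x <= tau (S i) -> N i x = uu lam (tau i) (tau (S i)) x.
Proof.
  intros Hi Hx. unfold N. assert (Hr : Rf i x = uu lam (tau i) (tau (S i)) x).
  { unfold Rf. destruct (Nat.ltb_spec i n); [auto|lia]. }
  rewrite Hr. apply maxmin_eq_r. apply uu_nonneg; auto; lra.
  pose proof (uu_le1 lam (tau i) (tau (S i)) Hlam (Hinc i Hi) x Hx).
  pose proof (Lf_ge1 i x ltac:(lia) (proj1 Hx)). lra.
Qed.

Lemma N_left i x : (i < n)%nat -> tau i <= x <= tau (S i) -> N (S i) x = vv lam (tau i) (tau (S i)) x.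
Proof.
  intros Hi Hx. unfold N. simpl Lf.
  apply maxmin_eq_l. apply vv_nonneg; auto; lra.
  pose proof (vv_le1 lam (tau i) (tau (S i)) Hlam (Hinc i Hi) x Hx).
  pose proof (Rf_ge1 (S i) x (proj2 Hx)). lra.
Qed.

Lemma N_zero_lo j x : (1 <= j <= n)%nat -> x <= tau (pred j) -> N j x = 0.
Proof.
  intros Hj Hx. unfold N. destruct j as [|k]; [lia|]. simpl Lf. simpl in Hx.
  apply maxmin_0l. apply vv_le0; auto. apply Hinc; lia.
Qed.

Lemma N_zero_hi j x : (j < n)%nat -> tau (S j) <= x -> N j x = 0.
Proof.
  intros Hj Hx. unfold N. apply maxmin_0r. unfold Rf.
  destruct (Nat.ltb_spec j n); [|lia]. apply uu_le0; auto.
Qed.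

Lemma N_other i j x : (i < n)%nat -> tau i <= x <= tau (S i) -> (j <= n)%nat ->
  j <> i -> j <> S i -> N j x = 0.
Proof.
  intros Hi Hx Hj H1 H2. destruct (Nat.lt_ge_cases j i) as [H|H].
  - apply N_zero_hi. lia. pose proof (tau_mono (S j) i ltac:(lia)). lra.
  - apply N_zero_lo. lia. pose proof (tau_mono (S i) (pred j) ltac:(lia)). lra.
Qed.

Lemma N_nonneg j x : 0 <= N j x.
Proof. unfold N. apply Rmax_l. Qed.


Lemma ab_lt : tau 0 < tau n.
Proof. apply tau_strict; lia. Qed.

Definition isSpl (s : R -> R) : Prop :=
  continuous_on (seg (tau 0) (tau n)) s /\
  (forall i, (i < n)%nat -> exists c1 c2, forall x, tau i <= x <= tau (S i) ->
     s x = c1 * exp (lam * x) + c2 * exp (- lam * x)).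

Lemma spl_local s i x : isSpl s -> (i < n)%nat -> tau i <= x <= tau (S i) ->
  s x = s (tau i) * uu lam (tau i) (tau (S i)) x + s (tau (S i)) * vv lam (tau i) (tau (S i)) x.
Proof.
  intros [_ Hs] Hi Hx. destruct (Hs i Hi) as [c1 [c2 Hc]].
  pose proof (Hinc i Hi).
  rewrite (Hc x Hx), (Hc (tau i)), (Hc (tau (S i))) by lra.
  symmetry. apply expcomb_rep; auto.
Qed.

Lemma spl_rep s x : isSpl s -> tau 0 <= x <= tau n ->
  s x = sumr (fun j => s (tau j) * N j x) (S n).
Proof.
  intros Hs Hx. destruct (find_interval x Hx) as [i [Hi Hxi]].
  rewrite (sum_two _ i). rewrite N_right, N_left by auto. apply spl_local; auto.
  lia. intros j Hj H1 H2. rewrite (N_other i j x); auto; try lia. ring.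
Qed.

Lemma cont_on_all (f : R -> R) (D : R -> Prop) : (forall x, continuous f x) -> continuous_on D f.
Proof. intros H. apply continuous_on_forall. intros; auto. Qed.

Lemma N_isSpl j : (j <= n)%nat -> isSpl (N j).
Proof.
  intros Hj. split. apply cont_on_all. intros; apply N_cont; auto.
  intros i Hi.
  destruct (Nat.eq_dec j i) as [E|E].
  - subst. eexists; eexists. intros x Hx. rewrite N_right by auto. apply uu_exp.
  - destruct (Nat.eq_dec j (S i)) as [E2|E2].
    + subst. eexists; eexists. intros x Hx. rewrite N_left by auto. apply vv_exp.
    + exists 0, 0. intros x Hx. rewrite (N_other i j x); auto. ring.
Qed.

Definition Lint (g : R -> R) (j : nat) : R :=
  RInt (fun x => g x * vv lam (tau (pred j)) (tau j) x) (tau (pred j)) (tau j).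
Definition Rint (g : R -> R) (j : nat) : R :=
  RInt (fun x => g x * uu lam (tau j) (tau (S j)) x) (tau j) (tau (S j)).

Lemma tau_in j : (tau 0 <= tau j <= tau n).
Proof.
  split. apply tau_mono; lia.
  destruct (Nat.le_gt_cases j n). apply tau_mono; auto. rewrite Hconst by lia. lra.
Qed.

Lemma ip_N (g : R -> R) j : continuous_on (seg (tau 0) (tau n)) g -> (j <= n)%nat ->
  RInt (fun x => g x * N j x) (tau 0) (tau n) = Lint g j + Rint g j.
Proof.
  intros Hg Hj.
  pose proof (tau_in (pred j)) as T1. pose proof (tau_in j) as T2. pose proof (tau_in (S j)) as T3.
  pose proof (tau_mono (pred j) j ltac:(lia)). pose proof (tau_mono j (S j) ltac:(lia)).
  assert (HN : forall x, continuous (N j) x) by (intros; apply N_cont; auto).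
  assert (EX : forall x0 x1, tau 0 <= x0 -> x0 <= x1 -> x1 <= tau n ->
     ex_RInt (fun x => g x * N j x) x0 x1) by (intros; eapply exR; eauto).
  rewrite <- (RI_chasles _ (tau 0) (tau (pred j)) (tau n)) by (apply EX; lra).
  rewrite <- (RI_chasles _ (tau (pred j)) (tau j) (tau n)) by (apply EX; lra).
  rewrite <- (RI_chasles _ (tau j) (tau (S j)) (tau n)) by (apply EX; lra).
  assert (Z1 : RInt (fun x => g x * N j x) (tau 0) (tau (pred j)) = 0).
  { destruct j as [|k]. apply RI_point.
    rewrite <- (RI_zero (tau 0) (tau (pred (S k)))). apply RI_ext. intros x Hx.
    rewrite Rmin_left, Rmax_right in Hx by lra. rewrite N_zero_lo; try lia; try lra. }
  assert (Z2 : RInt (fun x => g x * N j x) (tau (S j)) (tau n) = 0).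
  { destruct (Nat.eq_dec j n) as [E|E].
    - subst. rewrite Hconst by lia. apply RI_point.
    - rewrite <- (RI_zero (tau (S j)) (tau n)). apply RI_ext. intros x Hx.
      rewrite Rmin_left, Rmax_right in Hx by lra. rewrite N_zero_hi; try lia; try lra. }
  rewrite Z1, Z2. unfold Lint, Rint.
  assert (M1 : RInt (fun x => g x * N j x) (tau (pred j)) (tau j) =
               RInt (fun x => g x * vv lam (tau (pred j)) (tau j) x) (tau (pred j)) (tau j)).
  { destruct j as [|k]. simpl. rewrite !RI_point; auto.
    apply RI_ext. intros x Hx. rewrite Rmin_left, Rmax_right in Hx by lra. simpl in *.
    rewrite N_left; auto; try lia; try lra. }
  assert (M2 : RInt (fun x => g x * N j x) (tau j) (tau (S j)) =
               RInt (fun x => g x * uu lam (tau j) (tau (S j)) x) (tau j) (tau (S j))).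
  { destruct (Nat.eq_dec j n) as [E|E].
    - subst. rewrite (Hconst (S n)) by lia. rewrite !RI_point; auto.
    - apply RI_ext. intros x Hx. rewrite Rmin_left, Rmax_right in Hx by lra.
      rewrite N_right; auto; try lia; try lra. }
  rewrite M1, M2. toR. ring.
Qed.


Definition lc j := IB lam (tau (pred j)) (tau j).
Definition dc j := IC lam (tau (pred j)) (tau j) + IA lam (tau j) (tau (S j)).
Definition rc j := IB lam (tau j) (tau (S j)).
Definition wc j := IV lam (tau (pred j)) (tau j) + IU lam (tau j) (tau (S j)).

Lemma IV_pos x0 x1 : x0 < x1 -> 0 < IV lam x0 x1.
Proof.
  intros Hx. unfold IV. pose proof (S_pos lam x0 x1 Hlam Hx).
  rewrite int_vv by lra.
  assert (0 < lam * (x1 - x0)) by (apply Rmult_lt_0_compat; lra).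
  pose proof (ch_m1_ge (lam * (x1 - x0)) ltac:(lra)).
  apply Rdiv_lt_0_compat. nra. apply Rmult_lt_0_compat; lra.
Qed.

Lemma lc0 : lc 0 = 0.
Proof. unfold lc, IB. simpl. apply RI_point. Qed.
Lemma rcn : rc n = 0.
Proof. unfold rc, IB. rewrite (Hconst (S n)) by lia. apply RI_point. Qed.

Lemma left_props j : (j <= n)%nat ->
  0 <= IB lam (tau (pred j)) (tau j) /\ 0 <= IV lam (tau (pred j)) (tau j) /\
  IV lam (tau (pred j)) (tau j) / 3 <= IC lam (tau (pred j)) (tau j) - IB lam (tau (pred j)) (tau j) /\
  (j <> 0%nat -> 0 < IV lam (tau (pred j)) (tau j)).
Proof.
  intros Hj. destruct j as [|k].
  - simpl. unfold IB, IV, IC. rewrite !RI_point. repeat split; try lra. intros; lia.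
  - simpl. pose proof (Hinc k ltac:(lia)).
    pose proof (IV_pos _ _ H). pose proof (IB_nonneg lam _ _ Hlam H).
    pose proof (key_ineq_C lam _ _ Hlam H). repeat split; auto; lra.
Qed.

Lemma right_props j : (j <= n)%nat ->
  0 <= IB lam (tau j) (tau (S j)) /\ 0 <= IU lam (tau j) (tau (S j)) /\
  IU lam (tau j) (tau (S j)) / 3 <= IA lam (tau j) (tau (S j)) - IB lam (tau j) (tau (S j)) /\
  ((j < n)%nat -> 0 < IU lam (tau j) (tau (S j))).
Proof.
  intros Hj. destruct (Nat.eq_dec j n) as [E|E].
  - subst. rewrite (Hconst (S n)) by lia. unfold IB, IU, IA. rewrite !RI_point. repeat split; try lra. intros; lia.
  - pose proof (Hinc j ltac:(lia)).
    pose proof (IV_pos _ _ H). pose proof (IB_nonneg lam _ _ Hlam H).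
    pose proof (key_ineq_C lam _ _ Hlam H). rewrite IA_IC, IU_IV by auto. repeat split; auto; lra.
Qed.

Lemma coef_props j : (j <= n)%nat ->
  0 <= lc j /\ 0 <= rc j /\ 0 < wc j /\ wc j / 3 <= dc j - lc j - rc j.
Proof.
  intros Hj. destruct (left_props j Hj) as [L1 [L2 [L3 L4]]].
  destruct (right_props j Hj) as [R1 [R2 [R3 R4]]].
  unfold lc, rc, wc, dc. repeat split; auto; try lra.
  destruct (Nat.eq_dec j 0) as [E|E].
  - subst. specialize (R4 ltac:(lia)). lra.
  - specialize (L4 E). lra.
Qed.

Lemma ex_prod_cont (F G : R -> R) a b : (forall x, continuous F x) -> (forall x, continuous G x) ->
  ex_RInt (fun x => F x * G x) a b.
Proof.
  intros HF HG. apply ex_RInt_cont. intros x. apply cont_cpt. apply continuity_pt_mult; apply cpt_cont; auto.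
Qed.

Lemma Lint_spl s j : isSpl s -> (j <= n)%nat ->
  Lint s j = lc j * s (tau (pred j)) + IC lam (tau (pred j)) (tau j) * s (tau j).
Proof.
  intros Hs Hj. unfold Lint, lc, IB, IC. destruct j as [|k].
  - simpl. rewrite !RI_point. toR. ring.
  - simpl. pose proof (Hinc k ltac:(lia)).
    rewrite (RI_ext _ (fun x => s (tau k) * (uu lam (tau k) (tau (S k)) x * vv lam (tau k) (tau (S k)) x)
         + s (tau (S k)) * (vv lam (tau k) (tau (S k)) x * vv lam (tau k) (tau (S k)) x))).
    + rewrite RI_lin2. toR. ring.
      apply ex_prod_cont; intros; [apply uu_cont|apply vv_cont]; auto.
      apply ex_prod_cont; intros; apply vv_cont; auto.
    + intros x Hx. rewrite Rmin_left, Rmax_right in Hx by lra.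
      rewrite (spl_local s k x) by (auto; try lia; lra). ring.
Qed.

Lemma Rint_spl s j : isSpl s -> (j <= n)%nat ->
  Rint s j = IA lam (tau j) (tau (S j)) * s (tau j) + rc j * s (tau (S j)).
Proof.
  intros Hs Hj. unfold Rint, rc, IB, IA. destruct (Nat.eq_dec j n) as [E|E].
  - subst. rewrite (Hconst (S n)) by lia. rewrite !RI_point. toR. ring.
  - pose proof (Hinc j ltac:(lia)).
    rewrite (RI_ext _ (fun x => s (tau j) * (uu lam (tau j) (tau (S j)) x * uu lam (tau j) (tau (S j)) x)
         + s (tau (S j)) * (uu lam (tau j) (tau (S j)) x * vv lam (tau j) (tau (S j)) x))).
    + rewrite RI_lin2. toR. ring.
      apply ex_prod_cont; intros; apply uu_cont; auto.
      apply ex_prod_cont; intros; [apply uu_cont|apply vv_cont]; auto.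
    + intros x Hx. rewrite Rmin_left, Rmax_right in Hx by lra.
      rewrite (spl_local s j x) by (auto; try lia; lra). ring.
Qed.

Lemma ip_spl_N s j : isSpl s -> (j <= n)%nat ->
  RInt (fun x => s x * N j x) (tau 0) (tau n) = Row lc dc rc (fun k => s (tau k)) j.
Proof.
  intros Hs Hj. rewrite ip_N; auto. 2: apply Hs.
  rewrite Lint_spl, Rint_spl; auto. unfold Row, dc. toR. ring.
Qed.

Lemma Lint_bound f j : continuous_on (seg (tau 0) (tau n)) f ->
  (forall t, seg (tau 0) (tau n) t -> Rabs (f t) <= 1) -> (j <= n)%nat ->
  Rabs (Lint f j) <= IV lam (tau (pred j)) (tau j).
Proof.
  intros Hc Hf Hj. unfold Lint, IV. destruct j as [|k].
  - simpl. rewrite !RI_point, Rabs_R0. lra.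
  - simpl. pose proof (Hinc k ltac:(lia)). pose proof (tau_in k). pose proof (tau_in (S k)).
    apply RI_abs_le. lra. eapply exR; eauto; try lra. intros; apply vv_cont; auto.
    apply ex_RInt_cont. intros; apply vv_cont; auto.
    intros x Hx. rewrite Rabs_mult. rewrite (Rabs_pos_eq (vv _ _ _ x)) by (apply vv_nonneg; auto; lra).
    pose proof (vv_nonneg lam _ _ Hlam H x ltac:(lra)).
    assert (Rabs (f x) <= 1) by (apply Hf; unfold seg; lra). nra.
Qed.

Lemma Rint_bound f j : continuous_on (seg (tau 0) (tau n)) f ->
  (forall t, seg (tau 0) (tau n) t -> Rabs (f t) <= 1) -> (j <= n)%nat ->
  Rabs (Rint f j) <= IU lam (tau j) (tau (S j)).
Proof.
  intros Hc Hf Hj. unfold Rint, IU. destruct (Nat.eq_dec j n) as [E|E].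
  - subst. rewrite (Hconst (S n)) by lia. rewrite !RI_point, Rabs_R0. lra.
  - pose proof (Hinc j ltac:(lia)). pose proof (tau_in j). pose proof (tau_in (S j)).
    apply RI_abs_le. lra. eapply exR; eauto; try lra. intros; apply uu_cont; auto.
    apply ex_RInt_cont. intros; apply uu_cont; auto.
    intros x Hx. rewrite Rabs_mult. rewrite (Rabs_pos_eq (uu _ _ _ x)) by (apply uu_nonneg; auto; lra).
    pose proof (uu_nonneg lam _ _ Hlam H x ltac:(lra)).
    assert (Rabs (f x) <= 1) by (apply Hf; unfold seg; lra). nra.
Qed.

Theorem upper_bound f p : continuous_on (seg (tau 0) (tau n)) f ->
  (forall t, seg (tau 0) (tau n) t -> Rabs (f t) <= 1) -> isSpl p ->
  (forall s, isSpl s -> RInt (fun x => f x * s x) (tau 0) (tau n) = RInt (fun x => p x * s x) (tau 0) (tau n)) ->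
  forall x, seg (tau 0) (tau n) x -> Rabs (p x) <= 3.
Proof.
  intros Hfc Hf Hp Horth x Hx.
  assert (Hc : forall j, (j <= n)%nat -> Rabs (p (tau j)) <= 3 * 1).
  { apply (dominance n lc dc rc wc (fun k => p (tau k)) 1).
    - apply coef_props.
    - apply rcn.
    - intros j Hj. rewrite <- ip_spl_N; auto. rewrite <- Horth by (apply N_isSpl; auto).
      rewrite ip_N; auto. eapply Rle_trans. apply Rabs_triang.
      pose proof (Lint_bound f j Hfc Hf Hj). pose proof (Rint_bound f j Hfc Hf Hj).
      unfold wc. lra. }
  destruct (find_interval x Hx) as [i [Hi Hxi]].
  rewrite (spl_local p i x) by auto.
  pose proof (Hc i ltac:(lia)). pose proof (Hc (S i) ltac:(lia)).
  pose proof (Hinc i Hi).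
  pose proof (uu_nonneg lam _ _ Hlam H1 x ltac:(lra)). pose proof (vv_nonneg lam _ _ Hlam H1 x ltac:(lra)).
  pose proof (uu_vv_le1 lam _ _ Hlam H1 x Hxi).
  eapply Rle_trans. apply Rabs_triang. rewrite !Rabs_mult.
  rewrite (Rabs_pos_eq (uu _ _ _ x)), (Rabs_pos_eq (vv _ _ _ x)) by auto.
  nra.
Qed.


Lemma ip_expand g s : continuous_on (seg (tau 0) (tau n)) g -> isSpl s ->
  RInt (fun x => g x * s x) (tau 0) (tau n) =
  sumr (fun j => s (tau j) * RInt (fun x => g x * N j x) (tau 0) (tau n)) (S n).
Proof.
  intros Hg Hs. pose proof ab_lt.
  rewrite (RI_ext _ (fun x => sumr (fun j => s (tau j) * (g x * N j x)) (S n))).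
  - destruct (RI_sumr (fun j x => s (tau j) * (g x * N j x)) (tau 0) (tau n) (S n)) as [_ E].
    + intros j Hj. apply exRI_scal. eapply exR; eauto; try lra. intros; apply N_cont; lia.
    + rewrite E. apply sumr_ext. intros j Hj. apply RI_scal. eapply exR; eauto; try lra.
      intros; apply N_cont; lia.
  - intros x Hx. rewrite Rmin_left, Rmax_right in Hx by lra.
    rewrite (spl_rep s x Hs) by lra. rewrite sumr_mult. apply sumr_ext. intros; ring.
Qed.

Section Exist.
Variable c : nat -> R.
Definition Pc (x : R) := sumr (fun j => c j * N j x) (S n).

Lemma Pc_local i x : (i < n)%nat -> tau i <= x <= tau (S i) ->
  Pc x = c i * uu lam (tau i) (tau (S i)) x + c (S i) * vv lam (tau i) (tau (S i)) x.
Proof.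
  intros Hi Hx. unfold Pc. rewrite (sum_two _ i). rewrite N_right, N_left by auto. auto.
  lia. intros j Hj H1 H2. rewrite (N_other i j x); auto; try lia. ring.
Qed.

Lemma Pc_node k : (k <= n)%nat -> Pc (tau k) = c k.
Proof.
  intros Hk. destruct (Nat.eq_dec k n) as [E|E].
  - subst k. assert (Em : S (pred n) = n) by lia.
    pose proof (Hinc (pred n) ltac:(lia)) as H. rewrite Em in H.
    rewrite (Pc_local (pred n)) by (try lia; rewrite Em; lra). rewrite Em.
    rewrite uu_x1, vv_x1 by auto. ring.
  - pose proof (Hinc k ltac:(lia)).
    rewrite (Pc_local k) by (auto; try lia; lra). rewrite uu_x0, vv_x0 by auto. ring.
Qed.

Lemma Pc_isSpl : isSpl Pc.
Proof.
  split.
  - apply cont_on_all. intros x. apply sumr_cont. intros j Hj.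
    apply cont_cpt. apply continuity_pt_mult. apply continuity_pt_const; intros ? ?; auto.
    apply cpt_cont. apply N_cont. lia.
  - intros i Hi. pose proof (Hinc i Hi).
    set (S0 := sh (lam * (tau (S i) - tau i))).
    exists (c i * (- exp (- (lam * tau (S i))) / 2 / S0) + c (S i) * (exp (- (lam * tau i)) / 2 / S0)).
    exists (c i * (exp (lam * tau (S i)) / 2 / S0) + c (S i) * (- exp (lam * tau i) / 2 / S0)).
    intros x Hx. rewrite (Pc_local i x) by auto. rewrite uu_exp, vv_exp. fold S0. ring.
Qed.

Lemma Pc_row j : (j <= n)%nat -> Row lc dc rc (fun k => Pc (tau k)) j = Row lc dc rc c j.
Proof.
  intros Hj. unfold Row. rewrite !Pc_node by lia.
  destruct (Nat.eq_dec j n) as [E|E].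
  - subst. rewrite rcn. ring.
  - rewrite Pc_node by lia. ring.
Qed.
End Exist.

Theorem exist_proj f : continuous_on (seg (tau 0) (tau n)) f ->
  exists c : nat -> R,
    (forall j, (j <= n)%nat -> Row lc dc rc c j = Lint f j + Rint f j) /\
    isSpl (Pc c) /\ Pc c (tau n) = c n /\
    (forall s, isSpl s -> RInt (fun x => f x * s x) (tau 0) (tau n) = RInt (fun x => Pc c x * s x) (tau 0) (tau n)).
Proof.
  intros Hf.
  destruct (thomas_exists n lc dc rc (fun j => Lint f j + Rint f j)) as [c Hc].
  { intros j Hj. destruct (coef_props j Hj) as [? [? [? ?]]]. repeat split; auto; lra. }
  { apply lc0. } { apply rcn. }
  exists c. split; auto. split. apply Pc_isSpl. split. apply Pc_node; lia.
  intros s Hs. rewrite !ip_expand; auto. 2: apply Pc_isSpl.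
  apply sumr_ext. intros j Hj. f_equal.
  rewrite (ip_spl_N (Pc c) j) by (auto; try apply Pc_isSpl; lia). rewrite Pc_row by lia.
  rewrite Hc by lia. rewrite ip_N; auto; lia.
Qed.


Lemma RI_le_len (F : R -> R) x0 x1 : x0 <= x1 -> (forall x, continuous F x) ->
  (forall x, x0 <= x <= x1 -> F x <= 1) -> RInt F x0 x1 <= x1 - x0.
Proof.
  intros H HF HF1. rewrite <- (Rmult_1_r (x1 - x0)).
  replace ((x1 - x0) * 1) with (RInt (fun _ => 1) x0 x1).
  apply RI_le; auto. apply ex_RInt_cont; auto. apply ex_RInt_cont; intros; apply continuous_const.
  intros; apply HF1; lra.
  rewrite (@RInt_const R_CompleteNormedModule). reflexivity.
Qed.

Section IntervalFacts.
Variables (x0 x1 : R).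
Hypothesis Hx : x0 < x1.
Lemma IA_le : IA lam x0 x1 <= x1 - x0.
Proof.
  unfold IA. apply RI_le_len. lra. intros; apply cont_cpt; apply continuity_pt_mult; apply cpt_cont; apply uu_cont; auto.
  intros x Hx'. pose proof (uu_nonneg lam x0 x1 Hlam Hx x ltac:(lra)). pose proof (uu_le1 lam x0 x1 Hlam Hx x Hx'). nra.
Qed.
Lemma IB_le : IB lam x0 x1 <= x1 - x0.
Proof.
  unfold IB. apply RI_le_len. lra. intros; apply cont_cpt; apply continuity_pt_mult; apply cpt_cont; [apply uu_cont|apply vv_cont]; auto.
  intros x Hx'. pose proof (uu_nonneg lam x0 x1 Hlam Hx x ltac:(lra)). pose proof (uu_le1 lam x0 x1 Hlam Hx x Hx').
  pose proof (vv_nonneg lam x0 x1 Hlam Hx x ltac:(lra)). pose proof (vv_le1 lam x0 x1 Hlam Hx x Hx'). nra.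
Qed.
Lemma IC_le : IC lam x0 x1 <= x1 - x0.
Proof. rewrite <- IA_IC by auto. apply IA_le. Qed.
Lemma IU_le : IU lam x0 x1 <= x1 - x0.
Proof.
  unfold IU. apply RI_le_len. lra. intros; apply uu_cont; auto.
  intros x Hx'. apply (uu_le1 lam x0 x1 Hlam Hx x Hx').
Qed.

Lemma interval_step (q theta a gam : R) :
  0 < q <= 1/2 -> 0 <= theta -> lam * (x1 - x0) <= q ->
  IV lam x0 x1 - theta * (x1 - x0) <= a <= IV lam x0 x1 -> 0 <= a ->
  0 <= gam <= 3 ->
  let g' := (a + IB lam x0 x1 * gam) / IC lam x0 x1 in
  0 <= g' <= 3 /\
  (3 - (9 * q + 12 * theta)) - g' <= 11/12 * Rmax 0 ((3 - (9 * q + 12 * theta)) - gam).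
Proof.
  intros Hq Hth Hmu Ha Ha0 Hg g'.
  set (B := IB lam x0 x1) in *. set (C := IC lam x0 x1) in *. set (V := IV lam x0 x1) in *.
  pose proof (key_ineq_C lam x0 x1 Hlam Hx) as K. fold B C V in K.
  pose proof (IB_nonneg lam x0 x1 Hlam Hx) as HB. fold B in HB.
  pose proof (IV_ratio lam x0 x1 Hlam Hx) as VR. fold B C V in VR.
  pose proof (IV_lower lam x0 x1 Hlam Hx ltac:(lra)) as VL. fold V in VL.
  pose proof IC_le as CL. fold C in CL.
  assert (Hm0 : 0 < lam * (x1 - x0)) by (apply Rmult_lt_0_compat; lra).
  pose proof (ch_le_1sq (lam * (x1 - x0)) ltac:(lra)) as CH.
  pose proof (ch_ge1 (lam * (x1 - x0))) as CH1.
  set (cm := ch (lam * (x1 - x0))) in *.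
  assert (Hq2 : (lam * (x1 - x0)) ^ 2 <= q ^ 2) by (apply pow_incr; lra).
  assert (R1 : 3 - 9 * q <= 3 / cm ^ 2).
  { apply (Rmult_le_reg_r (cm ^ 2)). apply pow_lt; lra.
    unfold Rdiv. rewrite Rmult_assoc, Rinv_l by (apply pow_nonzero; lra).
    assert (cm ^ 2 <= (1 + q ^ 2) ^ 2) by (apply pow_incr; lra).
    assert (q ^ 2 <= q) by nra.
    assert ((1 + q ^ 2) ^ 2 * (3 - 9 * q) <= 3) by nra.
    assert (0 <= 3 - 9 * q \/ 3 - 9 * q < 0) by lra. destruct H1; nra. }
  assert (HCB : (x1 - x0) / 12 <= C - B) by lra.
  assert (HCpos : 0 < C) by lra.
  assert (Ha2 : (3 - (9 * q + 12 * theta)) * (C - B) <= a).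
  { assert (H1 : (3 - 9 * q) * (C - B) <= V).
    { eapply Rle_trans; [|apply VR]. apply Rmult_le_compat_r; lra. }
    assert (H2 : theta * (x1 - x0) <= theta * (12 * (C - B))).
    { apply Rmult_le_compat_l; lra. }
    replace ((3 - (9 * q + 12 * theta)) * (C - B)) with ((3 - 9 * q) * (C - B) - theta * (12 * (C - B))) by ring.
    destruct Ha as [Ha1 Ha2]. lra. }
  assert (HBC : B <= 11 / 12 * C) by lra.
  split.
  - unfold g'. fold B C. split.
    + apply Rdiv_le_0_compat; nra.
    + apply (Rmult_le_reg_r C); auto. unfold Rdiv. rewrite Rmult_assoc, Rinv_l by lra. nra.
  - unfold g'. fold B C.
    set (k := 3 - (9 * q + 12 * theta)) in *.
    assert (E : k - (a + B * gam) / C = (k * C - a - B * gam) / C) by (field; lra).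
    rewrite E. apply (Rmult_le_reg_r C); auto. unfold Rdiv. rewrite Rmult_assoc, Rinv_l by lra.
    assert (k * C - a - B * gam <= B * (k - gam)) by nra.
    pose proof (Rmax_l 0 (k - gam)). pose proof (Rmax_r 0 (k - gam)). nra.
Qed.
End IntervalFacts.


Fixpoint cs (f : R -> R) (k : nat) : R :=
  match k with
  | O => 0
  | S k' => (Lint f (S k') - IB lam (tau k') (tau (S k')) * cs f k') / IC lam (tau k') (tau (S k'))
  end.

Section Lower.
Variables (q theta : R) (f : R -> R) (aa : nat -> R).
Hypothesis Hq : 0 < q <= 1/2.
Hypothesis Hth : 0 <= theta.
Hypothesis Hn3 : (3 <= n)%nat.
Hypothesis Hfc : continuous_on (seg (tau 0) (tau n)) f.
Hypothesis Hf1 : forall t, seg (tau 0) (tau n) t -> Rabs (f t) <= 1.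
Hypothesis HL1 : Lint f 1 = 0.
Hypothesis HL2 : Lint f 2 = 0.
Hypothesis HR0 : Rint f 0 = 0.
Hypothesis HR1 : Rint f 1 = 0.
Hypothesis Hbeta : forall i, (2 <= i < n)%nat ->
  Lint f (S i) = (-1) ^ i * aa i /\
  IV lam (tau i) (tau (S i)) - theta * (tau (S i) - tau i) <= aa i <= IV lam (tau i) (tau (S i)) /\
  0 <= aa i.
Hypothesis Hmu1 : forall i, (1 <= i < n)%nat -> lam * (tau (S i) - tau i) <= 1.
Hypothesis Hmu2 : forall i, (2 <= i < n)%nat -> lam * (tau (S i) - tau i) <= q.
Hypothesis Hratio : forall j, (2 <= j < n)%nat -> tau (S j) - tau j <= 2 * q * (tau j - tau (pred j)).

Let kap := 9 * q + 12 * theta.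

Lemma IC_pos i : (i < n)%nat -> 0 < IC lam (tau i) (tau (S i)).
Proof.
  intros Hi. pose proof (Hinc i Hi). pose proof (key_ineq_C lam _ _ Hlam H).
  pose proof (IV_pos _ _ H). pose proof (IB_nonneg lam _ _ Hlam H). lra.
Qed.

Lemma cs1 : cs f 1 = 0.
Proof. simpl. rewrite HL1. unfold Rdiv. ring. Qed.
Lemma cs2 : cs f 2 = 0.
Proof. change (cs f 2) with ((Lint f 2 - IB lam (tau 1) (tau 2) * cs f 1) / IC lam (tau 1) (tau 2)).
  rewrite cs1, HL2. unfold Rdiv. ring. Qed.

Lemma neg1_pow k : (1 <= k)%nat -> (-1) ^ k = - (-1) ^ (k - 1).
Proof. intros H. destruct k; [lia|]. simpl. replace (k - 0)%nat with k by lia. ring. Qed.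

Lemma cs_gamma k : (2 <= k <= n)%nat -> exists g, cs f k = (-1) ^ (k - 1) * g /\ 0 <= g <= 3 /\
   (3 - kap) - g <= 3 * (11/12) ^ (k - 2).
Proof.
  induction k as [|k IH]; intros Hk; [lia|].
  destruct (Nat.eq_dec k 1) as [E|E].
  - subst. exists 0. rewrite cs2. split; [ring|]. split; [lra|]. simpl. unfold kap. lra.
  - destruct (IH ltac:(lia)) as [g [Hg1 [Hg2 Hg3]]].
    destruct (Hbeta k ltac:(lia)) as [Hb1 [Hb2 Hb3]].
    pose proof (Hinc k ltac:(lia)) as Hk'.
    destruct (interval_step (tau k) (tau (S k)) Hk' q theta (aa k) g Hq Hth (Hmu2 k ltac:(lia)) Hb2 Hb3 Hg2)
      as [G1 G2].
    set (g' := (aa k + IB lam (tau k) (tau (S k)) * g) / IC lam (tau k) (tau (S k))) in *.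
    exists g'. split; [|split; auto].
    + change (cs f (S k)) with ((Lint f (S k) - IB lam (tau k) (tau (S k)) * cs f k) / IC lam (tau k) (tau (S k))).
      rewrite Hb1, Hg1. replace (S k - 1)%nat with k by lia. unfold g'.
      rewrite (neg1_pow k) by lia. pose proof (IC_pos k ltac:(lia)). field. lra.
    + fold kap in G2. replace (S k - 2)%nat with (S (k - 2)) by lia. simpl.
      assert (0 <= 3 * (11/12) ^ (k - 2)) by (apply Rmult_le_pos; [lra|apply pow_le; lra]).
      assert (Rmax 0 (3 - kap - g) <= 3 * (11/12) ^ (k - 2)) by (apply Rmax_lub; lra). lra.
Qed.

Lemma cs_bound k : (k <= n)%nat -> Rabs (cs f k) <= 3.
Proof.
  intros Hk. destruct (Nat.lt_ge_cases k 2).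
  - destruct k as [|[|]]; [simpl; rewrite Rabs_R0; lra| rewrite cs1, Rabs_R0; lra| lia].
  - destruct (cs_gamma k ltac:(lia)) as [g [Hg1 [Hg2 _]]]. rewrite Hg1, Rabs_mult, pow_1_abs, (Rabs_pos_eq g) by lra. lra.
Qed.

Lemma residual j : (j <= n)%nat ->
  Rabs (Row lc dc rc (cs f) j - (Lint f j + Rint f j)) <= 56 * q * wc j.
Proof.
  intros Hj. pose proof (coef_props j Hj) as [_ [_ [Hw _]]].
  assert (Hq56 : 0 <= 56 * q * wc j) by (apply Rmult_le_pos; lra).
  destruct j as [|j].
  - unfold Row. simpl pred. rewrite lc0, HR0, cs1. unfold Lint. simpl. rewrite RI_point.
    replace (0 * 0 + dc 0 * 0 + rc 0 * 0 - (0 + 0)) with 0 by ring. rewrite Rabs_R0. auto.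
  - assert (HC : 0 < IC lam (tau j) (tau (S j))) by (apply IC_pos; lia).
    assert (E : Row lc dc rc (cs f) (S j) - (Lint f (S j) + Rint f (S j)) =
       IA lam (tau (S j)) (tau (S (S j))) * cs f (S j) + rc (S j) * cs f (S (S j)) - Rint f (S j)).
    { unfold Row, dc, lc. simpl pred.
      change (cs f (S j)) with ((Lint f (S j) - IB lam (tau j) (tau (S j)) * cs f j) / IC lam (tau j) (tau (S j))).
      field. lra. }
    rewrite E.
    destruct (Nat.eq_dec j 0) as [E0|E0].
    + subst. rewrite cs1, cs2, HR1. replace (IA lam (tau 1) (tau 2) * 0 + rc 1 * 0 - 0) with 0 by ring.
      rewrite Rabs_R0; auto.
    + destruct (Nat.eq_dec (S j) n) as [En|En].
      * assert (Hsn : tau (S (S j)) = tau (S j)) by (rewrite (Hconst (S (S j))), (Hconst (S j)) by lia; reflexivity).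
        unfold Rint, rc, IA, IB. rewrite Hsn.
        rewrite !RI_point. replace (0 * cs f (S j) + 0 * cs f (S (S j)) - 0) with 0 by ring. rewrite Rabs_R0; auto.
      * pose proof (Hinc (S j) ltac:(lia)) as Hi.
        pose proof (IA_le _ _ Hi). pose proof (IB_le _ _ Hi). pose proof (IA_IC lam _ _ Hlam Hi).
        pose proof (IB_nonneg lam _ _ Hlam Hi). pose proof (right_props (S j) ltac:(lia)) as [_ [HU _]].
        pose proof (IU_le _ _ Hi).
        pose proof (Rint_bound f (S j) Hfc Hf1 ltac:(lia)).
        pose proof (cs_bound (S j) ltac:(lia)). pose proof (cs_bound (S (S j)) ltac:(lia)).
        assert (IAnn : 0 <= IA lam (tau (S j)) (tau (S (S j)))).
        { rewrite (IA_IC lam _ _ Hlam Hi). pose proof (key_ineq_C lam _ _ Hlam Hi). pose proof (IV_pos _ _ Hi). lra. }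
        set (h := tau (S (S j)) - tau (S j)) in *.
        assert (Hres : Rabs (IA lam (tau (S j)) (tau (S (S j))) * cs f (S j) + rc (S j) * cs f (S (S j)) - Rint f (S j)) <= 7 * h).
        { unfold rc. eapply Rle_trans. apply Rabs_triang. rewrite Rabs_Ropp.
          eapply Rle_trans. apply Rplus_le_compat_r. apply Rabs_triang. rewrite !Rabs_mult.
          rewrite (Rabs_pos_eq (IA _ _ _)), (Rabs_pos_eq (IB _ _ _)) by auto.
          assert (IA lam (tau (S j)) (tau (S (S j))) * Rabs (cs f (S j)) <= h * 3).
          { apply Rmult_le_compat; auto; apply Rabs_pos. }
          assert (IB lam (tau (S j)) (tau (S (S j))) * Rabs (cs f (S (S j))) <= h * 3).
          { apply Rmult_le_compat; auto; apply Rabs_pos. }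
          lra. }
        pose proof (Hratio (S j) ltac:(lia)) as HR. simpl pred in HR. fold h in HR.
        pose proof (Hinc j ltac:(lia)) as Hj'.
        pose proof (IV_lower lam _ _ Hlam Hj' (Hmu1 j ltac:(lia))) as VL.
        pose proof (left_props (S j) Hj) as [_ [_ [_ _]]].
        assert (wc (S j) >= IV lam (tau j) (tau (S j))).
        { unfold wc. simpl pred. pose proof (right_props (S j) Hj) as [_ [HU' _]]. lra. }
        assert (7 * h <= 56 * q * wc (S j)).
        { assert (h <= 2 * q * (4 * IV lam (tau j) (tau (S j)))).
          { eapply Rle_trans. apply HR. apply Rmult_le_compat_l; lra. }
          assert (2 * q * (4 * IV lam (tau j) (tau (S j))) <= 2 * q * (4 * wc (S j))).
          { apply Rmult_le_compat_l; lra. }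
          lra. }
        lra.
Qed.

Theorem lower_abstract : exists c : nat -> R,
    isSpl (Pc c) /\ Pc c (tau n) = c n /\
    (forall s, isSpl s -> RInt (fun x => f x * s x) (tau 0) (tau n) = RInt (fun x => Pc c x * s x) (tau 0) (tau n)) /\
    3 - kap - 3 * (11/12) ^ (n - 2) - 168 * q <= Rabs (c n).
Proof.
  destruct (exist_proj f Hfc) as [c [Hrow [Hspl [Hnode Horth]]]].
  exists c. split; auto. split; auto. split; auto.
  assert (Hd : forall j, (j <= n)%nat -> Rabs (c j - cs f j) <= 3 * (56 * q)).
  { apply (dominance n lc dc rc wc (fun k => c k - cs f k) (56 * q)).
    - apply coef_props.
    - apply rcn.
    - intros j Hj. replace (Row lc dc rc (fun k => c k - cs f k) j) with
        (- (Row lc dc rc (cs f) j - (Lint f j + Rint f j))).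
      rewrite Rabs_Ropp. apply residual; auto.
      rewrite <- (Hrow j Hj). unfold Row. ring. }
  specialize (Hd n ltac:(lia)).
  destruct (cs_gamma n ltac:(lia)) as [g [Hg1 [Hg2 Hg3]]].
  assert (Rabs (cs f n) = g) by (rewrite Hg1, Rabs_mult, pow_1_abs, Rabs_pos_eq; lra).
  assert (Rabs (cs f n) - Rabs (c n) <= Rabs (c n - cs f n)).
  { replace (c n - cs f n) with (- (cs f n - c n)) by ring. rewrite Rabs_Ropp.
    apply Rabs_triang_inv. }
  lra.
Qed.
End Lower.

End Part.

Lemma link_spl (lam : R) (n : nat) (tau : nat -> R) (D : list R) (s : R -> R) : length D = S n -> (forall i, (i <= n)%nat -> nth i D 0 = tau i) ->
  (is_Lspline (tau O) (tau n) lam D s <-> isSpl lam n tau s).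
Proof.
  intros HL HD. unfold is_Lspline, isSpl. split; intros [H1 H2]; split; auto.
  - intros i Hi. destruct (H2 i ltac:(lia)) as [c1 [c2 Hc]]. exists c1, c2.
    intros x Hx. apply Hc. rewrite !HD by lia. auto.
  - intros i Hi. destruct (H2 i ltac:(lia)) as [c1 [c2 Hc]]. exists c1, c2.
    intros x Hx. apply Hc. rewrite !HD in Hx by lia. auto.
Qed.

Definition tauD (D : list R) (i : nat) := nth (Nat.min i (pred (length D))) D 0.

Lemma part_tau a b D : is_partition a b D ->
  (1 <= pred (length D))%nat /\
  (forall i, (i < pred (length D))%nat -> tauD D i < tauD D (S i)) /\
  (forall i, (pred (length D) <= i)%nat -> tauD D i = tauD D (pred (length D))) /\
  tauD D O = a /\ tauD D (pred (length D)) = b /\ length D = S (pred (length D)) /\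
  (forall i, (i <= pred (length D))%nat -> nth i D 0 = tauD D i).
Proof.
  intros [HL [H0 [Hn Hinc]]]. unfold tauD.
  repeat split.
  - lia.
  - intros i Hi. rewrite !Nat.min_l by lia. apply Hinc. lia.
  - intros i Hi. rewrite Nat.min_r by lia. rewrite Nat.min_id. auto.
  - rewrite Nat.min_l by lia. auto.
  - rewrite Nat.min_id. auto.
  - lia.
  - intros i Hi. rewrite Nat.min_l by lia. auto.
Qed.

Lemma opnorm_le3 a b lam D : 0 < lam -> is_partition a b D ->
  Rbar_le (proj_opnorm a b lam D) 3.
Proof.
  intros Hlam HP. destruct (part_tau a b D HP) as [Hn [Hinc [Hconst [Ha [Hb [HL HD]]]]]].
  set (n := pred (length D)) in *. set (tau := tauD D) in *.
  unfold proj_opnorm. destruct (Lub_Rbar_correct (proj_values a b lam D)) as [_ Hleast].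
  apply Hleast. intros y [f [p [x [Hfc [Hf [[Hpspl Horth] [Hx Hy]]]]]]].
  subst y. simpl. rewrite <- Ha, <- Hb in *.
  apply (upper_bound lam n tau Hlam Hn Hinc Hconst f p); auto.
  - apply (link_spl lam n tau D p HL HD). auto.
  - intros s Hs. apply Horth. apply (link_spl lam n tau D s HL HD). auto.
Qed.

Definition Pb (N : nat) (y : R) := 1 - (2 * y - 1) ^ (2 * N).

Lemma Pb_range N y : 0 <= y <= 1 -> 0 <= Pb N y <= 1.
Proof.
  intros [Hy0 Hy1]. unfold Pb. rewrite pow_mult.
  assert (0 <= (2 * y - 1) ^ 2 <= 1) by (split; [apply pow2_ge_0|nra]).
  assert (0 <= ((2 * y - 1) ^ 2) ^ N) by (apply pow_le; lra).
  assert (((2 * y - 1) ^ 2) ^ N <= 1 ^ N) by (apply pow_incr; lra).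
  rewrite pow1 in H1. lra.
Qed.
Lemma Pb_0 N : Pb N 0 = 0.
Proof. unfold Pb. rewrite pow_mult. replace ((2 * 0 - 1) ^ 2) with 1 by ring. rewrite pow1. ring. Qed.
Lemma Pb_1 N : Pb N 1 = 0.
Proof. unfold Pb. rewrite pow_mult. replace ((2 * 1 - 1) ^ 2) with 1 by ring. rewrite pow1. ring. Qed.

Section Constr.
Variables (a b lam q : R) (N n : nat).
Hypothesis Hab : a < b.
Hypothesis Hlam : 0 < lam.
Hypothesis Hq : 0 < q <= 1/2.
Hypothesis Hn3 : (3 <= n)%nat.

Definition HH := Rmin ((b - a) / 2) (/ lam).

Lemma HH_pos : 0 < HH.
Proof. unfold HH. apply Rmin_glb_lt. lra. apply Rinv_0_lt_compat; auto. Qed.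
Lemma HH_le : HH <= (b - a) / 2.
Proof. apply Rmin_l. Qed.
Lemma lamHH : lam * HH <= 1.
Proof.
  unfold HH. pose proof (Rmin_r ((b - a) / 2) (/ lam)).
  apply (Rmult_le_compat_l lam) in H; [|lra]. rewrite Rinv_r in H; lra.
Qed.

Definition tq (i : nat) : R :=
  if Nat.eqb i 0 then a else if Nat.ltb i n then b - HH * q ^ (i - 1) else b.

Lemma tq_0 : tq 0 = a.
Proof. reflexivity. Qed.
Lemma tq_mid i : (1 <= i < n)%nat -> tq i = b - HH * q ^ (i - 1).
Proof.
  intros H. unfold tq. destruct (Nat.eqb_spec i 0); [lia|]. destruct (Nat.ltb_spec i n); [auto|lia].
Qed.
Lemma tq_end i : (n <= i)%nat -> tq i = b.
Proof.
  intros H. unfold tq. destruct (Nat.eqb_spec i 0); [lia|]. destruct (Nat.ltb_spec i n); [lia|auto].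
Qed.

Lemma qpow_pos k : 0 < q ^ k.
Proof. apply pow_lt; lra. Qed.
Lemma qpow_le1 k : q ^ k <= 1.
Proof. induction k; simpl. lra. pose proof (qpow_pos k). nra. Qed.

Lemma len_mid i : (1 <= i)%nat -> (S i < n)%nat -> tq (S i) - tq i = HH * q ^ (i - 1) * (1 - q).
Proof.
  intros H1 H2. rewrite !tq_mid by lia. replace (S i - 1)%nat with (S (i - 1)) by lia. simpl. ring.
Qed.
Lemma len_last i : (1 <= i)%nat -> S i = n -> tq (S i) - tq i = HH * q ^ (i - 1).
Proof. intros H1 H2. rewrite tq_end by lia. rewrite tq_mid by lia. ring. Qed.

Lemma len_le i : (1 <= i < n)%nat -> 0 < tq (S i) - tq i <= HH * q ^ (i - 1).
Proof.
  intros H. pose proof HH_pos. pose proof (qpow_pos (i - 1)).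
  destruct (Nat.eq_dec (S i) n) as [E|E].
  - rewrite len_last by lia. split; [apply Rmult_lt_0_compat|]; lra.
  - rewrite len_mid by lia. split.
    + apply Rmult_lt_0_compat; [apply Rmult_lt_0_compat|]; lra.
    + assert (HH * q ^ (i - 1) * q >= 0) by (apply Rle_ge, Rmult_le_pos; [apply Rmult_le_pos|]; lra). nra.
Qed.

Lemma tq_inc i : (i < n)%nat -> tq i < tq (S i).
Proof.
  intros H. destruct (Nat.eq_dec i 0) as [E|E].
  - subst. rewrite tq_0, tq_mid by lia. simpl. pose proof HH_le. lra.
  - pose proof (len_le i ltac:(lia)). lra.
Qed.
Lemma tq_const i : (n <= i)%nat -> tq i = tq n.
Proof. intros H. rewrite !tq_end by lia. auto. Qed.
Lemma tq_n : tq n = b.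
Proof. apply tq_end; lia. Qed.

Lemma Hn1 : (1 <= n)%nat.
Proof. lia. Qed.

Lemma mu1 i : (1 <= i < n)%nat -> lam * (tq (S i) - tq i) <= 1.
Proof.
  intros H. destruct (len_le i H) as [H0a H0b]. pose proof (qpow_le1 (i - 1)). pose proof HH_pos. pose proof lamHH.
  assert (HH * q ^ (i - 1) <= HH * 1) by (apply Rmult_le_compat_l; lra).
  assert (lam * (tq (S i) - tq i) <= lam * HH) by (apply Rmult_le_compat_l; lra). lra.
Qed.
Lemma mu2 i : (2 <= i < n)%nat -> lam * (tq (S i) - tq i) <= q.
Proof.
  intros H. pose proof (len_le i ltac:(lia)). pose proof HH_pos. pose proof lamHH.
  replace (i - 1)%nat with (S (i - 2)) in H0 by lia. simpl in H0. destruct H0 as [H0a H0b].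
  pose proof (qpow_le1 (i - 2)). pose proof (qpow_pos (i - 2)).
  assert (HH * (q * q ^ (i - 2)) <= HH * q).
  { apply Rmult_le_compat_l; [lra|]. assert (q * q ^ (i - 2) <= q * 1) by (apply Rmult_le_compat_l; lra). lra. }
  assert (lam * (tq (S i) - tq i) <= lam * (HH * q)) by (apply Rmult_le_compat_l; lra).
  assert (lam * (HH * q) <= q) by (rewrite <- Rmult_assoc; assert (lam * HH * q <= 1 * q) by (apply Rmult_le_compat_r; lra); lra).
  lra.
Qed.
Lemma ratio j : (2 <= j < n)%nat -> tq (S j) - tq j <= 2 * q * (tq j - tq (pred j)).
Proof.
  intros H. pose proof (len_le j ltac:(lia)). pose proof HH_pos.
  replace j with (S (pred j)) at 3 by lia.
  rewrite (len_mid (pred j)) by lia. replace (j - 1)%nat with (S (pred j - 1)) in H0 by lia. simpl in H0.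
  destruct H0 as [H0a H0b].
  pose proof (qpow_pos (pred j - 1)).
  replace (2 * q * (HH * q ^ (pred j - 1) * (1 - q))) with ((HH * (q * q ^ (pred j - 1))) * (2 * (1 - q))) by ring.
  assert (0 <= HH * (q * q ^ (pred j - 1))) by (apply Rmult_le_pos; [lra|]; apply Rmult_le_pos; lra).
  assert (HH * (q * q ^ (pred j - 1)) * 1 <= HH * (q * q ^ (pred j - 1)) * (2 * (1 - q))) by (apply Rmult_le_compat_l; lra).
  lra.
Qed.

Definition Fq (j : nat) (x : R) := Pb N (clamp 0 1 ((x - tq j) / (tq (S j) - tq j))).
Definition zeta (j : nat) : R := if Nat.leb 2 j then (-1) ^ j else 0.
Definition fq (x : R) := sumr (fun j => zeta j * Fq j x) n.

Lemma Fq_range j x : 0 <= Fq j x <= 1.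
Proof. apply Pb_range. apply clamp_seg. lra. Qed.

Lemma Fq_hi j x : (j < n)%nat -> tq (S j) <= x -> Fq j x = 0.
Proof.
  intros Hj Hx. unfold Fq. pose proof (tq_inc j Hj).
  assert (1 <= (x - tq j) / (tq (S j) - tq j)).
  { apply (Rmult_le_reg_r (tq (S j) - tq j)). lra. unfold Rdiv. rewrite Rmult_assoc, Rinv_l; lra. }
  unfold clamp. rewrite Rmin_left by lra. rewrite Rmax_right by lra. apply Pb_1.
Qed.
Lemma Fq_lo j x : (j < n)%nat -> x <= tq j -> Fq j x = 0.
Proof.
  intros Hj Hx. unfold Fq. pose proof (tq_inc j Hj).
  assert ((x - tq j) / (tq (S j) - tq j) <= 0).
  { unfold Rdiv. apply Rmult_le_0_r. lra. left; apply Rinv_0_lt_compat; lra. }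
  unfold clamp. rewrite Rmin_right by lra. rewrite Rmax_left by lra. apply Pb_0.
Qed.

Lemma Fq_cont j x : (j < n)%nat -> continuous (Fq j) x.
Proof.
  intros Hj. pose proof (tq_inc j Hj). unfold Fq.
  apply (continuous_comp (fun y => clamp 0 1 ((y - tq j) / (tq (S j) - tq j))) (Pb N)).
  - apply (continuous_comp (fun y => (y - tq j) / (tq (S j) - tq j)) (clamp 0 1)).
    + apply cont_R. auto_derive. auto.
    + apply clamp_cont.
  - apply cont_R. unfold Pb. auto_derive. auto.
Qed.

Lemma fq_cont x : continuous fq x.
Proof.
  unfold fq. apply sumr_cont. intros j Hj. apply cont_cpt. apply continuity_pt_mult.
  apply continuity_pt_const. intros ? ?; auto. apply cpt_cont. apply Fq_cont; auto.
Qed.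

Lemma tq_mono i k : (i <= k)%nat -> tq i <= tq k.
Proof. apply (tau_mono n tq Hn1 tq_inc tq_const). Qed.

Lemma fq_local i x : (i < n)%nat -> tq i <= x <= tq (S i) -> fq x = zeta i * Fq i x.
Proof.
  intros Hi Hx. unfold fq.
  assert (Hz : forall j, (j < n)%nat -> j <> i -> Fq j x = 0).
  { intros j Hj Hne. destruct (Nat.lt_ge_cases j i).
    - apply Fq_hi; auto. pose proof (tq_mono (S j) i ltac:(lia)). lra.
    - apply Fq_lo; auto. pose proof (tq_mono (S i) j ltac:(lia)). lra. }
  rewrite (sum_two_gen _ i n).
  - destruct (Nat.ltb_spec i n); [|lia]. destruct (Nat.ltb_spec (S i) n).
    + rewrite (Hz (S i)) by (auto; lia). ring.
    + ring.
  - intros j Hj H1 H2. rewrite Hz by auto. ring.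
Qed.

Lemma zeta_abs j : Rabs (zeta j) <= 1.
Proof.
  unfold zeta. destruct (Nat.leb 2 j). rewrite pow_1_abs. lra. rewrite Rabs_R0. lra.
Qed.

Lemma fq_bound t : seg (tq 0) (tq n) t -> Rabs (fq t) <= 1.
Proof.
  intros Ht. destruct (find_interval n tq Hn1 t Ht) as [i [Hi Hti]].
  rewrite (fq_local i t Hi Hti). rewrite Rabs_mult. pose proof (zeta_abs i).
  pose proof (Fq_range i t). rewrite (Rabs_pos_eq (Fq i t)) by lra.
  assert (0 <= Rabs (zeta i)) by apply Rabs_pos. nra.
Qed.

Definition aq (i : nat) : R := RInt (fun x => Fq i x * vv lam (tq i) (tq (S i)) x) (tq i) (tq (S i)).

Lemma Lint_fq i : (i < n)%nat -> Lint lam tq fq (S i) = zeta i * aq i.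
Proof.
  intros Hi. unfold Lint, aq. simpl pred. pose proof (tq_inc i Hi).
  rewrite (RI_ext _ (fun x => zeta i * (Fq i x * vv lam (tq i) (tq (S i)) x))).
  - apply RI_scal. apply ex_prod_cont; intros; [apply Fq_cont; auto| apply vv_cont; auto].
  - intros x Hx. rewrite Rmin_left, Rmax_right in Hx by lra. rewrite (fq_local i x) by (auto; lra). ring.
Qed.

Lemma Rint_fq i : (i < n)%nat -> Rint lam tq fq i = zeta i * RInt (fun x => Fq i x * uu lam (tq i) (tq (S i)) x) (tq i) (tq (S i)).
Proof.
  intros Hi. unfold Rint. pose proof (tq_inc i Hi).
  rewrite (RI_ext _ (fun x => zeta i * (Fq i x * uu lam (tq i) (tq (S i)) x))).
  - apply RI_scal. apply ex_prod_cont; intros; [apply Fq_cont; auto| apply uu_cont; auto].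
  - intros x Hx. rewrite Rmin_left, Rmax_right in Hx by lra. rewrite (fq_local i x) by (auto; lra). ring.
Qed.

Lemma zeta0 : zeta 0 = 0. Proof. reflexivity. Qed.
Lemma zeta1 : zeta 1 = 0. Proof. reflexivity. Qed.
Lemma zeta_ge2 i : (2 <= i)%nat -> zeta i = (-1) ^ i.
Proof. intros H. unfold zeta. destruct (Nat.leb_spec 2 i); [auto|lia]. Qed.

Lemma int_pow_bump x0 x1 : x0 < x1 ->
  RInt (fun x => (2 * ((x - x0) / (x1 - x0)) - 1) ^ (2 * N)) x0 x1 = (x1 - x0) / (2 * INR N + 1).
Proof.
  intros Hx. assert (HN : 0 < 2 * INR N + 1) by (pose proof (pos_INR N); lra).
  rewrite (RInt_anti (fun x => (x1 - x0) / (2 * (2 * INR N + 1)) * (2 * ((x - x0) / (x1 - x0)) - 1) ^ (S (2 * N)))).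
  - toR. replace (2 * ((x1 - x0) / (x1 - x0)) - 1) with 1 by (field; lra).
    replace (2 * ((x0 - x0) / (x1 - x0)) - 1) with (-1) by (field; lra).
    rewrite pow1. rewrite <- tech_pow_Rmult, pow_mult. replace ((-1) ^ 2) with 1 by ring. rewrite pow1. field. lra.
  - intros x. auto_derive.
    + lra.
    + toR. replace (match (N + (N + 0))%nat with | 0%nat => 1 | S _ => INR (N + (N + 0)) + 1 end) with (2 * INR N + 1).
      replace (N + (N + 0))%nat with (2 * N)%nat by lia.
      replace (2 * ((x + - x0) * / (x1 - x0)) + - (1)) with (2 * ((x - x0) / (x1 - x0)) - 1) by (unfold Rminus, Rdiv; ring).
      set (Z := (2 * ((x - x0) / (x1 - x0)) - 1) ^ (2 * N)). field. lra.
      change (match (N + (N + 0))%nat with | 0%nat => 1 | S _ => INR (N + (N + 0)) + 1 end) with (INR (S (N + (N + 0)))).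
      rewrite S_INR, !plus_INR. simpl INR. ring.
  - intros x. apply cont_R. auto_derive. lra.
Qed.

Lemma aq_bounds i : (2 <= i < n)%nat ->
  IV lam (tq i) (tq (S i)) - / (2 * INR N + 1) * (tq (S i) - tq i) <= aq i <= IV lam (tq i) (tq (S i)) /\
  0 <= aq i.
Proof.
  intros Hi. pose proof (tq_inc i ltac:(lia)) as H.
  assert (EF : ex_RInt (fun x => Fq i x * vv lam (tq i) (tq (S i)) x) (tq i) (tq (S i))).
  { apply ex_prod_cont; intros; [apply Fq_cont; lia| apply vv_cont; auto]. }
  assert (EV : ex_RInt (vv lam (tq i) (tq (S i))) (tq i) (tq (S i))).
  { apply ex_RInt_cont. intros; apply vv_cont; auto. }
  assert (E1F : ex_RInt (fun x => 1 - Fq i x) (tq i) (tq (S i))).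
  { apply ex_RInt_cont. intros. apply cont_cpt. apply continuity_pt_minus.
    apply continuity_pt_const; intros ? ?; auto. apply cpt_cont, Fq_cont; lia. }
  assert (Hvv : forall x, tq i < x < tq (S i) -> 0 <= vv lam (tq i) (tq (S i)) x <= 1).
  { intros x Hx. split. apply vv_nonneg; auto; lra. apply vv_le1; auto; lra. }
  split; [split|].
  - assert (D : IV lam (tq i) (tq (S i)) - aq i = RInt (fun x => 1 * vv lam (tq i) (tq (S i)) x + (-1) * (Fq i x * vv lam (tq i) (tq (S i)) x)) (tq i) (tq (S i))).
    { rewrite RI_lin2; auto. unfold IV, aq. ring. }
    assert (B : RInt (fun x => 1 * vv lam (tq i) (tq (S i)) x + (-1) * (Fq i x * vv lam (tq i) (tq (S i)) x)) (tq i) (tq (S i))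
               <= RInt (fun x => 1 - Fq i x) (tq i) (tq (S i))).
    { apply RI_le. lra. apply exRI_plus. apply exRI_scal; auto. apply exRI_scal; auto. auto.
      intros x Hx. pose proof (Hvv x Hx). pose proof (Fq_range i x).
      assert ((1 - Fq i x) * vv lam (tq i) (tq (S i)) x <= (1 - Fq i x) * 1) by (apply Rmult_le_compat_l; lra). lra. }
    assert (C : RInt (fun x => 1 - Fq i x) (tq i) (tq (S i)) = (tq (S i) - tq i) / (2 * INR N + 1)).
    { rewrite <- int_pow_bump by auto. apply RI_ext. intros x Hx. rewrite Rmin_left, Rmax_right in Hx by lra.
      unfold Fq, Pb. rewrite clamp_id. ring.
      split. apply Rdiv_le_0_compat; lra.
      apply (Rmult_le_reg_r (tq (S i) - tq i)). lra. unfold Rdiv. rewrite Rmult_assoc, Rinv_l; lra. }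
    unfold Rdiv in C. lra.
  - unfold IV, aq. apply RI_le. lra. auto. auto. intros x Hx. pose proof (Hvv x Hx). pose proof (Fq_range i x).
    assert (Fq i x * vv lam (tq i) (tq (S i)) x <= 1 * vv lam (tq i) (tq (S i)) x) by (apply Rmult_le_compat_r; lra). lra.
  - unfold aq. rewrite <- (RI_zero (tq i) (tq (S i))). apply RI_le. lra.
    apply ex_RInt_cont; intros; apply continuous_const. auto.
    intros x Hx. pose proof (Hvv x Hx). pose proof (Fq_range i x). apply Rmult_le_pos; lra.
Qed.

End Constr.

Lemma nth_map_seq (tau : nat -> R) m i : (i < m)%nat -> nth i (map tau (seq 0 m)) 0 = tau i.
Proof.
  intros H. rewrite (nth_indep _ 0 (tau 0%nat)) by (rewrite length_map, length_seq; auto).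
  rewrite map_nth, seq_nth by auto. auto.
Qed.

Lemma lower_exists (a b lam : R) : a < b -> 0 < lam -> forall eps, 0 < eps ->
  exists D, is_partition a b D /\ exists y, proj_values a b lam D y /\ 3 - eps <= y.
Proof.
  intros Hab Hlam eps Heps.
  set (q := Rmin (1/2) (eps / 708)).
  assert (Hq : 0 < q <= 1/2).
  { unfold q. split. apply Rmin_glb_lt; lra. apply Rmin_l. }
  assert (Hq2 : q <= eps / 708) by apply Rmin_r.
  destruct (INR_archimed eps 48 Heps) as [N HN].
  destruct (pow_lt_1_zero (11/12) ltac:(rewrite Rabs_pos_eq; lra) (eps / 12) ltac:(lra)) as [M HM].
  set (n := (M + 3)%nat).
  assert (Hn3 : (3 <= n)%nat) by (unfold n; lia).
  set (tau := tq a b lam q n).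
  set (theta := / (2 * INR N + 1)).
  assert (HNpos : 0 < 2 * INR N + 1) by (pose proof (pos_INR N); lra).
  assert (Hth : 0 <= theta) by (unfold theta; left; apply Rinv_0_lt_compat; lra).
  set (f := fq a b lam q N n).
  destruct (lower_abstract lam n tau Hlam (Hn1 n Hn3) (tq_inc a b lam q n Hab Hlam Hq Hn3)
      (tq_const a b lam q n Hn3) q theta f (aq a b lam q N n) Hq Hth Hn3) as [c [Hspl [Hnode [Horth Hbd]]]].
  - apply cont_on_all. intros x. apply fq_cont; auto.
  - apply fq_bound; auto.
  - change 1%nat with (S 0). unfold f, tau. rewrite Lint_fq by (auto; lia). rewrite zeta0. ring.
  - change 2%nat with (S 1). unfold f, tau. rewrite Lint_fq by (auto; lia). rewrite zeta1. ring.
  - unfold f, tau. rewrite Rint_fq by (auto; lia). rewrite zeta0. ring.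
  - unfold f, tau. rewrite Rint_fq by (auto; lia). rewrite zeta1. ring.
  - intros i Hi. unfold f, tau. rewrite Lint_fq by (auto; lia). rewrite (zeta_ge2 n Hn3 i) by lia.
    destruct (aq_bounds a b lam q N n Hab Hlam Hq Hn3 i Hi) as [H1 H2]. split; auto.
  - apply mu1; auto.
  - apply mu2; auto.
  - apply ratio; auto.
  - set (D := map tau (seq 0 (S n))).
    assert (HL : length D = S n) by (unfold D; rewrite length_map, length_seq; auto).
    assert (HD : forall i, (i <= n)%nat -> nth i D 0 = tau i) by (intros; unfold D; apply nth_map_seq; lia).
    assert (Ha : tau O = a) by apply tq_0.
    assert (Hb : tau n = b) by (apply tq_n; auto).
    exists D. split.
    + unfold is_partition. repeat split.
      * rewrite HL. lia.
      * rewrite HD by lia. auto.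
      * rewrite HL. change (pred (S n)) with n. auto.
      * intros i Hi. rewrite HL in Hi. rewrite !HD by lia. apply tq_inc; auto. lia.
    + exists (Rabs (c n)). split.
      * exists f, (Pc lam n tau c), b. rewrite <- Ha, <- Hb. split; [|split; [|split; [split|split]]].
        -- apply cont_on_all. intros x. apply fq_cont; auto.
        -- apply fq_bound; auto.
        -- apply (link_spl lam n tau D _ HL HD). auto.
        -- intros s Hs. unfold L2ip. apply Horth. apply (link_spl lam n tau D s HL HD). auto.
        -- unfold seg. pose proof (tq_inc a b lam q n Hab Hlam Hq Hn3). 
           pose proof (tau_mono n tau (Hn1 n Hn3) (tq_inc a b lam q n Hab Hlam Hq Hn3) (tq_const a b lam q n Hn3) 0 n ltac:(lia)).
           lra.
        -- rewrite Hnode. auto.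
      * assert (E1 : 3 * (11/12) ^ (n - 2) <= eps / 4).
        { specialize (HM (n - 2)%nat ltac:(unfold n; lia)). rewrite Rabs_pos_eq in HM by (apply pow_le; lra). lra. }
        assert (E2 : 12 * theta <= eps / 4).
        { unfold theta. apply (Rmult_le_reg_r (2 * INR N + 1)); auto.
          rewrite Rmult_assoc, Rinv_l by lra. pose proof (pos_INR N). nra. }
        lra.
Qed.

Theorem mainTheorem1 (a b lam : R) (hab : a < b) (hlam : 0 < lam) :
  Rbar_is_lub
    (fun z : Rbar => exists D : list R, is_partition a b D /\ z = proj_opnorm a b lam D)
    (Finite 3).
Proof.
  split.
  - intros z [D [HD Hz]]. subst z. apply opnorm_le3; auto.
  - intros u Hu.
    assert (Hlow : forall eps, 0 < eps -> Rbar_le (Finite (3 - eps)) u).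
    { intros eps Heps. destruct (lower_exists a b lam hab hlam eps Heps) as [D [HD [y [Hy Hy3]]]].
      assert (Hle : Rbar_le (Finite y) (proj_opnorm a b lam D)).
      { unfold proj_opnorm. destruct (Lub_Rbar_correct (proj_values a b lam D)) as [Hub _]. apply Hub. auto. }
      assert (Hu' : Rbar_le (proj_opnorm a b lam D) u) by (apply Hu; exists D; auto).
      eapply Rbar_le_trans; [|apply Hu']. eapply Rbar_le_trans; [|apply Hle]. simpl. auto. }
    destruct u as [u| |]; simpl in *; auto.
    + apply Rnot_lt_le. intros H. specialize (Hlow ((3 - u) / 2) ltac:(lra)). simpl in Hlow. lra.
    + specialize (Hlow 1 ltac:(lra)). simpl in Hlow. auto.
Qed.
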